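(* For $\beta,k,m\in\mathbb{N}$ and $\operatorname{Re}(s)>1$, $$\sum_{n=1}^\infty\frac{\Lambda^{(\beta)}_{k,m}(n)}{n^s}=(-1)^k\sigma^{(\beta)}_{1-s/\beta}(m)\frac{\zeta^{(k)}(s)}{\zeta(s)},$$ the series converging absolutely, where $\zeta^{(k)}$ is the $k$-th derivative of the Riemann zeta-function.
   Context: For $\beta,q,m\in\mathbb{N}$, $c_q^{(\beta)}(m)=\sum e^{2\pi i mh/q^\beta}$, the sum over integers $0\le h<q^\beta$ such that $h$ and $q^\beta$ have no common divisor of the form $d^\beta$ with $d>1$. For $z\in\mathbb{C}$, $\sigma_z^{(\beta)}(m)=\sum_{d\in\mathbb{N},\ d^\beta\mid m}d^{\beta z}$. The generalized von Mangoldt function is $\Lambda^{(\beta)}_{k,m}(n)=\sum_{d\delta=n}c_d^{(\beta)}(m)\log^k\delta$ (so $\Lambda^{(1)}_{1,1}=\Lambda$). *)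

(* Defs.v *)
From Stdlib Require Import Reals Lra Lia Arith List ClassicalEpsilon.
Import ListNotations.
Open Scope R_scope.

Definition Cx : Type := (R * R)%type.
Definition Re (z : Cx) : R := fst z.
Definition Im (z : Cx) : R := snd z.
Definition RtoC (r : R) : Cx := (r, 0).
Definition Cx0 : Cx := (0, 0).
Definition Cx1 : Cx := (1, 0).
Definition Cadd (z w : Cx) : Cx := (fst z + fst w, snd z + snd w).
Definition Copp (z : Cx) : Cx := (- fst z, - snd z).
Definition Csub (z w : Cx) : Cx := Cadd z (Copp w).
Definition Cmul (z w : Cx) : Cx :=
  (fst z * fst w - snd z * snd w, fst z * snd w + snd z * fst w).
Definition Cinv (z : Cx) : Cx :=
  let d := fst z * fst z + snd z * snd z in (fst z / d, - snd z / d).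
Definition Cdiv (z w : Cx) : Cx := Cmul z (Cinv w).
Definition Cnorm (z : Cx) : R := sqrt (fst z * fst z + snd z * snd z).
Definition Cexp (z : Cx) : Cx := (exp (fst z) * cos (snd z), exp (fst z) * sin (snd z)).
Definition Cpow_pos (a : R) (z : Cx) : Cx := Cexp (Cmul (RtoC (ln a)) z).

Definition Csum_list (l : list Cx) : Cx := fold_right Cadd Cx0 l.

Fixpoint Cpartial (f : nat -> Cx) (N : nat) : Cx :=
  match N with
  | O => f O
  | S N' => Cadd (Cpartial f N') (f N)
  end.
Definition Cseries_conv (f : nat -> Cx) (l : Cx) : Prop :=
  forall eps : R, eps > 0 -> exists N : nat, forall n : nat, (n >= N)%nat ->
    Cnorm (Csub (Cpartial f n) l) < eps.
Definition Cseries_abs_conv (f : nat -> Cx) : Prop :=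
  exists l : R, Un_cv (fun N => sum_f_R0 (fun i => Cnorm (f i)) N) l.

Definition C_inhabited : inhabited Cx := inhabits Cx0.

(** The sum of a series (a chosen limit; meaningful when it converges). *)
Definition Cseries_sum (f : nat -> Cx) : Cx := epsilon C_inhabited (Cseries_conv f).

(** Riemann zeta function, defined on Re s > 1 by sum_{n>=1} n^{-s}. *)
Definition zeta (s : Cx) : Cx :=
  Cseries_sum (fun i => Cinv (Cpow_pos (INR (S i)) s)).

Definition Cderivable_lim (f : Cx -> Cx) (z l : Cx) : Prop :=
  forall eps : R, eps > 0 -> exists delta : R, delta > 0 /\
    forall h : Cx, h <> Cx0 -> Cnorm h < delta ->
      Cnorm (Csub (Cdiv (Csub (f (Cadd z h)) (f z)) h) l) < eps.
Definition Cderiv (f : Cx -> Cx) (z : Cx) : Cx :=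
  epsilon C_inhabited (Cderivable_lim f z).
Fixpoint Cderiv_n (k : nat) (f : Cx -> Cx) : Cx -> Cx :=
  match k with
  | O => f
  | S k' => Cderiv (Cderiv_n k' f)
  end.

Definition beta_coprime (beta h N : nat) : Prop :=
  forall d : nat, (1 < d)%nat ->
    ~ (Nat.divide (Nat.pow d beta) h /\ Nat.divide (Nat.pow d beta) N).

Definition ramanujan_beta (beta q m : nat) : Cx :=
  let Q := Nat.pow q beta in
  Csum_list (map (fun h =>
     if excluded_middle_informative (beta_coprime beta h Q)
     then Cexp (0, 2 * PI * INR m * INR h / INR Q)
     else Cx0) (seq 0 Q)).

(** sigma_z^{(beta)}(m) = sum_{d in N, d^beta | m} d^{beta z}  (m >= 1, so d <= m) *)
Definition sigma_beta (beta : nat) (z : Cx) (m : nat) : Cx :=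
  Csum_list (map (fun d =>
     if excluded_middle_informative (Nat.divide (Nat.pow d beta) m)
     then Cpow_pos (INR d) (Cmul (RtoC (INR beta)) z)
     else Cx0) (seq 1 m)).

Definition Lambda_beta (beta k m n : nat) : Cx :=
  Csum_list (map (fun d =>
     if excluded_middle_informative (Nat.divide d n)
     then Cmul (ramanujan_beta beta d m) (RtoC (ln (INR (n / d)) ^ k))
     else Cx0) (seq 1 n)).

Definition dirichlet_term (beta k m : nat) (s : Cx) (n : nat) : Cx :=
  Cdiv (Lambda_beta beta k m n) (Cpow_pos (INR n) s).

(* Main.v *)
Require Import Defs.
From Stdlib Require Import Reals Lra Lia Arith List ClassicalEpsilon FunctionalExtensionality.
From mathcomp Require ssreflect ssrfun ssrbool eqtype ssrnat div.
Import ListNotations.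
Open Scope R_scope.


Lemma Cx_ext (z w : Cx) : fst z = fst w -> snd z = snd w -> z = w.
Proof. destruct z, w; simpl; intros; subst; auto. Qed.

Ltac cxd := repeat match goal with z : Cx |- _ => destruct z end.
Ltac cgen := repeat match goal with |- context [?t] =>
  match type of t with Cx =>
   lazymatch t with
   | Cadd _ _ => fail | Cmul _ _ => fail | Copp _ => fail | Csub _ _ => fail | RtoC _ => fail
   | Cx0 => fail | Cx1 => fail | (_,_) => fail
   | _ => tryif is_var t then fail else (generalize t; intro) end end end.
Ltac cring := cgen; cxd; apply Cx_ext; unfold Cadd, Csub, Copp, Cmul, RtoC, Cx0, Cx1; simpl; ring.

Lemma Cadd_comm z w : Cadd z w = Cadd w z. Proof. cring. Qed.
Lemma Cadd_assoc z w u : Cadd z (Cadd w u) = Cadd (Cadd z w) u. Proof. cring. Qed.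
Lemma Cadd_0_l z : Cadd Cx0 z = z. Proof. cring. Qed.
Lemma Cadd_0_r z : Cadd z Cx0 = z. Proof. cring. Qed.
Lemma Cmul_comm z w : Cmul z w = Cmul w z. Proof. cring. Qed.
Lemma Cmul_assoc z w u : Cmul z (Cmul w u) = Cmul (Cmul z w) u. Proof. cring. Qed.
Lemma Cmul_0_r z : Cmul z Cx0 = Cx0. Proof. cring. Qed.
Lemma Cmul_0_l z : Cmul Cx0 z = Cx0. Proof. cring. Qed.
Lemma Cmul_1_l z : Cmul Cx1 z = z. Proof. cring. Qed.
Lemma Cmul_1_r z : Cmul z Cx1 = z. Proof. cring. Qed.
Lemma Cmul_add_r z w u : Cmul z (Cadd w u) = Cadd (Cmul z w) (Cmul z u). Proof. cring. Qed.
Lemma Cmul_add_l z w u : Cmul (Cadd w u) z = Cadd (Cmul w z) (Cmul u z). Proof. cring. Qed.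
Lemma RtoC_mul a b : RtoC (a * b) = Cmul (RtoC a) (RtoC b). Proof. apply Cx_ext; unfold Cmul, RtoC; simpl; ring. Qed.
Lemma RtoC_add a b : RtoC (a + b) = Cadd (RtoC a) (RtoC b). Proof. apply Cx_ext; unfold Cadd, RtoC; simpl; ring. Qed.

Lemma Cnorm_ge_fst z : Rabs (fst z) <= Cnorm z.
Proof.
  unfold Cnorm. rewrite <- sqrt_Rsqr_abs. apply sqrt_le_1_alt.
  unfold Rsqr. nra.
Qed.
Lemma Cnorm_ge_snd z : Rabs (snd z) <= Cnorm z.
Proof.
  unfold Cnorm. rewrite <- sqrt_Rsqr_abs. apply sqrt_le_1_alt.
  unfold Rsqr. nra.
Qed.
Lemma Cnorm_nonneg z : 0 <= Cnorm z.
Proof. unfold Cnorm. apply sqrt_pos. Qed.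
Lemma Cnorm_le_sum z : Cnorm z <= Rabs (fst z) + Rabs (snd z).
Proof.
  unfold Cnorm. destruct z as [a b]; simpl.
  assert (H: a*a + b*b <= Rsqr (Rabs a + Rabs b)).
  { unfold Rsqr. assert (0 <= Rabs a * Rabs b) by (apply Rmult_le_pos; apply Rabs_pos).
    replace (a*a) with (Rabs a * Rabs a). replace (b*b) with (Rabs b * Rabs b). nra.
    rewrite <- Rabs_mult; apply Rabs_pos_eq; nra.
    rewrite <- Rabs_mult; apply Rabs_pos_eq; nra. }
  rewrite <- (sqrt_Rsqr (Rabs a + Rabs b)). apply sqrt_le_1_alt. exact H.
  pose proof (Rabs_pos a); pose proof (Rabs_pos b); lra.
Qed.
Lemma Cnorm_mul z w : Cnorm (Cmul z w) = Cnorm z * Cnorm w.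
Proof.
  unfold Cnorm, Cmul; destruct z as [a b], w as [c d]; simpl.
  rewrite <- sqrt_mult_alt by nra. f_equal. ring.
Qed.
Lemma Cnorm_RtoC r : Cnorm (RtoC r) = Rabs r.
Proof. unfold Cnorm, RtoC; simpl. rewrite <- sqrt_Rsqr_abs. unfold Rsqr. f_equal. ring. Qed.
Lemma Cnorm_sq z : Cnorm z * Cnorm z = fst z * fst z + snd z * snd z.
Proof. unfold Cnorm. rewrite sqrt_sqrt; nra. Qed.
Lemma Cnorm_triangle z w : Cnorm (Cadd z w) <= Cnorm z + Cnorm w.
Proof.
  pose proof (Cnorm_nonneg z); pose proof (Cnorm_nonneg w); pose proof (Cnorm_nonneg (Cadd z w)).
  apply Rsqr_incr_0_var; [|lra]. unfold Rsqr.
  rewrite Cnorm_sq. 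
  assert (Hcs: fst z * fst w + snd z * snd w <= Cnorm z * Cnorm w).
  { destruct (Rle_dec (fst z * fst w + snd z * snd w) 0). nra.
    apply Rsqr_incr_0_var; [|nra]. unfold Rsqr.
    replace (Cnorm z * Cnorm w * (Cnorm z * Cnorm w)) with ((Cnorm z * Cnorm z) * (Cnorm w * Cnorm w)) by ring.
    rewrite !Cnorm_sq. destruct z as [a b], w as [c d]; simpl. pose proof (Rle_0_sqr (a*d - b*c)). unfold Rsqr in *. nra. }
  replace ((Cnorm z + Cnorm w) * (Cnorm z + Cnorm w)) with (Cnorm z * Cnorm z + Cnorm w * Cnorm w + 2 * (Cnorm z * Cnorm w)) by ring.
  rewrite !Cnorm_sq. destruct z as [a b], w as [c d]; unfold Cadd; simpl in *. nra.
Qed.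
Lemma Cnorm_opp z : Cnorm (Copp z) = Cnorm z.
Proof. unfold Cnorm, Copp; simpl. f_equal; ring. Qed.
Lemma Cnorm_sub_triangle z w : Cnorm (Csub z w) <= Cnorm z + Cnorm w.
Proof. unfold Csub. rewrite <- (Cnorm_opp w). apply Cnorm_triangle. Qed.
Lemma Cnorm_zero_iff z : Cnorm z = 0 -> z = Cx0.
Proof.
  intros H. assert (Cnorm z * Cnorm z = 0) by (rewrite H; ring).
  rewrite Cnorm_sq in H0. destruct z as [a b]; simpl in *. unfold Cx0. f_equal; nra.
Qed.
Lemma Cnorm_0 : Cnorm Cx0 = 0.
Proof. unfold Cnorm, Cx0; simpl. replace (0*0+0*0) with 0 by ring. apply sqrt_0. Qed.
Lemma Cnorm_pos z : z <> Cx0 -> 0 < Cnorm z.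
Proof. intros H. destruct (Cnorm_nonneg z); auto. exfalso; apply H; apply Cnorm_zero_iff; auto. Qed.

Lemma Cx_nz_sq z : z <> Cx0 -> fst z * fst z + snd z * snd z <> 0.
Proof. intros H E. apply H. destruct z as [a b]; simpl in *; unfold Cx0; f_equal; nra. Qed.

Lemma Cmul_inv_r z : z <> Cx0 -> Cmul z (Cinv z) = Cx1.
Proof.
  intros H. pose proof (Cx_nz_sq z H). destruct z as [a b]; simpl in *.
  unfold Cmul, Cinv, Cx1; simpl. f_equal; field; auto.
Qed.
Lemma Cinv_unique z w : Cmul z w = Cx1 -> Cinv z = w.
Proof.
  intros H. assert (Hz : z <> Cx0). { intros ->. rewrite Cmul_0_l in H. unfold Cx0, Cx1 in H. inversion H. lra. }
  rewrite <- (Cmul_1_r (Cinv z)). rewrite <- H. rewrite Cmul_assoc.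
  rewrite (Cmul_comm (Cinv z)). rewrite Cmul_inv_r; auto. apply Cmul_1_l.
Qed.
Lemma Cnorm_inv z : z <> Cx0 -> Cnorm (Cinv z) = / Cnorm z.
Proof.
  intros H. pose proof (Cnorm_pos z H).
  assert (Cnorm z * Cnorm (Cinv z) = 1).
  { rewrite <- Cnorm_mul, Cmul_inv_r by auto. unfold Cnorm, Cx1; simpl. replace (1*1+0*0) with 1 by ring. apply sqrt_1. }
  field_simplify_eq; [|lra]. lra.
Qed.
Lemma Cmul_integral z w : Cmul z w = Cx0 -> z <> Cx0 -> w = Cx0.
Proof.
  intros H Hz. rewrite <- (Cmul_1_l w). rewrite <- (Cmul_inv_r z Hz).
  rewrite (Cmul_comm z), <- Cmul_assoc, H. apply Cmul_0_r.
Qed.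

Lemma Cexp_add z w : Cexp (Cadd z w) = Cmul (Cexp z) (Cexp w).
Proof.
  destruct z as [a b], w as [c d]; unfold Cexp, Cadd, Cmul; simpl.
  rewrite exp_plus, cos_plus, sin_plus. apply Cx_ext; simpl; ring.
Qed.
Lemma Cnorm_Cexp z : Cnorm (Cexp z) = exp (fst z).
Proof.
  destruct z as [a b]; unfold Cnorm, Cexp; simpl.
  replace (exp a * cos b * (exp a * cos b) + exp a * sin b * (exp a * sin b)) with (Rsqr (exp a) * (Rsqr (sin b) + Rsqr (cos b))) by (unfold Rsqr; ring).
  rewrite sin2_cos2, Rmult_1_r. apply sqrt_Rsqr. left; apply exp_pos.
Qed.
Lemma Cexp_nz z : Cexp z <> Cx0.
Proof. intros H. pose proof (Cnorm_Cexp z). rewrite H, Cnorm_0 in H0. pose proof (exp_pos (fst z)). lra. Qed.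
Lemma Cexp_0 : Cexp Cx0 = Cx1.
Proof. unfold Cexp, Cx0, Cx1; simpl. rewrite exp_0, cos_0, sin_0. f_equal; ring. Qed.
Lemma Cinv_Cexp z : Cinv (Cexp z) = Cexp (Copp z).
Proof.
  apply Cinv_unique. rewrite <- Cexp_add. replace (Cadd z (Copp z)) with Cx0 by cring. apply Cexp_0.
Qed.
Lemma Cexp_real r : Cexp (RtoC r) = RtoC (exp r).
Proof. unfold Cexp, RtoC; simpl. rewrite cos_0, sin_0. f_equal; ring. Qed.

Lemma Cpow_add x z w : Cpow_pos x (Cadd z w) = Cmul (Cpow_pos x z) (Cpow_pos x w).
Proof. unfold Cpow_pos. rewrite <- Cexp_add. f_equal. cring. Qed.
Lemma Cpow_nz x z : Cpow_pos x z <> Cx0.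
Proof. apply Cexp_nz. Qed.
Lemma Cnorm_Cpow x z : Cnorm (Cpow_pos x z) = exp (ln x * fst z).
Proof. unfold Cpow_pos. rewrite Cnorm_Cexp. unfold Cmul, RtoC; simpl. f_equal; ring. Qed.
Lemma Cpow_mulbase x y z : 0 < x -> 0 < y -> Cpow_pos (x * y) z = Cmul (Cpow_pos x z) (Cpow_pos y z).
Proof.
  intros. unfold Cpow_pos. rewrite <- Cexp_add. f_equal. rewrite ln_mult by auto. cring.
Qed.
Lemma Cinv_Cpow x z : Cinv (Cpow_pos x z) = Cpow_pos x (Copp z).
Proof. unfold Cpow_pos. rewrite Cinv_Cexp. f_equal. cring. Qed.
Lemma Cpow_real x r : 0 < x -> Cpow_pos x (RtoC r) = RtoC (Rpower x r).
Proof. intros. unfold Cpow_pos, Rpower. rewrite <- RtoC_mul, Cexp_real. f_equal. f_equal. ring. Qed.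

Ltac boolsimp := repeat match goal with H : Nat.leb _ _ = true |- _ => apply Nat.leb_le in H
      | H : Nat.leb _ _ = false |- _ => apply Nat.leb_gt in H
      | H : Nat.ltb _ _ = true |- _ => apply Nat.ltb_lt in H
      | H : Nat.ltb _ _ = false |- _ => apply Nat.ltb_ge in H
      | H : Nat.eqb _ _ = true |- _ => apply Nat.eqb_eq in H
      | H : Nat.eqb _ _ = false |- _ => apply Nat.eqb_neq in H end.
Definition CS (l : list nat) (f : nat -> Cx) : Cx := Csum_list (map f l).
Definition RS (l : list nat) (f : nat -> R) : R := fold_right Rplus 0 (map f l).

Lemma CS_nil f : CS [] f = Cx0. Proof. reflexivity. Qed.
Lemma CS_cons a l f : CS (a :: l) f = Cadd (f a) (CS l f). Proof. reflexivity. Qed.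
Lemma RS_nil f : RS [] f = 0. Proof. reflexivity. Qed.
Lemma RS_cons a l f : RS (a :: l) f = f a + RS l f. Proof. reflexivity. Qed.
Lemma CS_app l1 l2 f : CS (l1 ++ l2) f = Cadd (CS l1 f) (CS l2 f).
Proof. induction l1; simpl. rewrite CS_nil, Cadd_0_l; auto. rewrite !CS_cons, IHl1. apply Cadd_assoc. Qed.
Lemma RS_app l1 l2 f : RS (l1 ++ l2) f = RS l1 f + RS l2 f.
Proof. induction l1; simpl. rewrite RS_nil; ring. rewrite !RS_cons, IHl1. ring. Qed.
Lemma CS_ext l f g : (forall x, In x l -> f x = g x) -> CS l f = CS l g.
Proof. induction l; intros H; auto. rewrite !CS_cons. rewrite H by (left; auto). rewrite IHl; auto. intros; apply H; right; auto. Qed.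
Lemma RS_ext l f g : (forall x, In x l -> f x = g x) -> RS l f = RS l g.
Proof. induction l; intros H; auto. rewrite !RS_cons. rewrite H by (left; auto). rewrite IHl; auto. intros; apply H; right; auto. Qed.
Lemma CS_add l f g : CS l (fun x => Cadd (f x) (g x)) = Cadd (CS l f) (CS l g).
Proof. induction l. unfold CS; simpl; cring. rewrite !CS_cons, IHl. cring. Qed.
Lemma CS_scal l c f : CS l (fun x => Cmul c (f x)) = Cmul c (CS l f).
Proof. induction l. unfold CS; simpl; cring. rewrite !CS_cons, IHl. cring. Qed.
Lemma CS_sub l f g : CS l (fun x => Csub (f x) (g x)) = Csub (CS l f) (CS l g).
Proof. induction l. unfold CS; simpl; cring. rewrite !CS_cons, IHl. cring. Qed.
Lemma CS_zero l : CS l (fun _ => Cx0) = Cx0.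
Proof. induction l; auto. rewrite CS_cons, IHl. cring. Qed.
Lemma RS_add l f g : RS l (fun x => f x + g x) = RS l f + RS l g.
Proof. induction l. unfold RS; simpl; ring. rewrite !RS_cons, IHl. ring. Qed.
Lemma RS_scal l c f : RS l (fun x => c * f x) = c * RS l f.
Proof. induction l. unfold RS; simpl; ring. rewrite !RS_cons, IHl. ring. Qed.
Lemma RS_zero l : RS l (fun _ => 0) = 0.
Proof. induction l; auto. rewrite RS_cons, IHl. ring. Qed.
Lemma RS_le l f g : (forall x, In x l -> f x <= g x) -> RS l f <= RS l g.
Proof. induction l; intros H. unfold RS; simpl; lra. rewrite !RS_cons. pose proof (H a (or_introl eq_refl)).
  assert (RS l f <= RS l g) by (apply IHl; intros; apply H; right; auto). lra. Qed.
Lemma RS_nonneg l f : (forall x, In x l -> 0 <= f x) -> 0 <= RS l f.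
Proof. intros H. rewrite <- (RS_zero l). apply RS_le; auto. Qed.
Lemma CS_norm l f : Cnorm (CS l f) <= RS l (fun x => Cnorm (f x)).
Proof. induction l. rewrite CS_nil, Cnorm_0; unfold RS; simpl; lra. rewrite CS_cons, RS_cons.
  pose proof (Cnorm_triangle (f a) (CS l f)). lra. Qed.
Lemma CS_RtoC l f : CS l (fun x => RtoC (f x)) = RtoC (RS l f).
Proof. induction l. reflexivity. rewrite CS_cons, RS_cons, IHl, RtoC_add. reflexivity. Qed.
Lemma CS_swap l1 l2 (G : nat -> nat -> Cx) :
  CS l1 (fun x => CS l2 (fun y => G x y)) = CS l2 (fun y => CS l1 (fun x => G x y)).
Proof.
  induction l1. simpl. rewrite CS_zero. reflexivity.
  rewrite CS_cons, IHl1. rewrite <- CS_add. apply CS_ext. intros; rewrite CS_cons; auto.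
Qed.
Lemma RS_swap l1 l2 (G : nat -> nat -> R) :
  RS l1 (fun x => RS l2 (fun y => G x y)) = RS l2 (fun y => RS l1 (fun x => G x y)).
Proof.
  induction l1. simpl. rewrite RS_zero. reflexivity.
  rewrite RS_cons, IHl1. rewrite <- RS_add. apply RS_ext. intros; rewrite RS_cons; auto.
Qed.
Lemma RS_mul l1 l2 f g : RS l1 f * RS l2 g = RS l1 (fun x => RS l2 (fun y => f x * g y)).
Proof. induction l1. unfold RS; simpl; ring. rewrite !RS_cons, <- IHl1, RS_scal. ring. Qed.
Lemma CS_mul l1 l2 f g : Cmul (CS l1 f) (CS l2 g) = CS l1 (fun x => CS l2 (fun y => Cmul (f x) (g y))).
Proof. induction l1. unfold CS; simpl; cring. rewrite !CS_cons, <- IHl1, CS_scal. cring. Qed.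

Lemma seq_split a n m : seq a (n + m) = seq a n ++ seq (a + n) m.
Proof. revert a; induction n; intros a; simpl. rewrite Nat.add_0_r; auto. rewrite IHn. do 3 f_equal. lia. Qed.

Lemma CS_single a n c (v : Cx) :
  CS (seq a n) (fun x => if Nat.eq_dec x c then v else Cx0) =
  if (Nat.leb a c && Nat.ltb c (a + n))%bool then v else Cx0.
Proof.
  revert a; induction n; intros a.
  - simpl. destruct (Nat.leb a c) eqn:E1; destruct (Nat.ltb c (a+0)) eqn:E2; simpl; auto.
    apply Nat.leb_le in E1; apply Nat.ltb_lt in E2; lia.
  - simpl seq. rewrite CS_cons, IHn. destruct (Nat.eq_dec a c).
    + subst. destruct (Nat.leb (S c) c) eqn:E. apply Nat.leb_le in E; lia.
      simpl. rewrite Nat.leb_refl. destruct (Nat.ltb c (c + S n)) eqn:E2. apply Cadd_0_r.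
      apply Nat.ltb_ge in E2; lia.
    + rewrite Cadd_0_l. destruct (Nat.leb (S a) c) eqn:E1; destruct (Nat.leb a c) eqn:E3;
      destruct (Nat.ltb c (S a + n)) eqn:E2; destruct (Nat.ltb c (a + S n)) eqn:E4; simpl; auto;
      repeat match goal with H : Nat.leb _ _ = true |- _ => apply Nat.leb_le in H
      | H : Nat.leb _ _ = false |- _ => apply Nat.leb_gt in H
      | H : Nat.ltb _ _ = true |- _ => apply Nat.ltb_lt in H
      | H : Nat.ltb _ _ = false |- _ => apply Nat.ltb_ge in H end; lia.
Qed.


Definition CP (x : nat -> Cx) (M : nat) : Cx := CS (seq 1 M) x.
Definition CCV (x : nat -> Cx) (l : Cx) : Prop :=
  forall eps, eps > 0 -> exists N, forall M, (N <= M)%nat -> Cnorm (Csub (CP x M) l) < eps.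
Definition BND (g : nat -> R) : Prop := exists B, forall M, RS (seq 1 M) g <= B.

Lemma seq_S_end a n : seq a (S n) = seq a n ++ [a + n]%nat.
Proof. replace (S n) with (n + 1)%nat by lia. rewrite seq_split. reflexivity. Qed.

Lemma CP_S x M : CP x (S M) = Cadd (CP x M) (x (S M)).
Proof. unfold CP. rewrite seq_S_end, CS_app. simpl. rewrite CS_cons, CS_nil, Cadd_0_r. reflexivity. Qed.
Lemma RS_S g M : RS (seq 1 (S M)) g = RS (seq 1 M) g + g (S M).
Proof. rewrite seq_S_end, RS_app. simpl. rewrite RS_cons, RS_nil. ring. Qed.

Lemma Cpartial_CP x N : Cpartial (fun i => x (S i)) N = CP x (S N).
Proof.
  induction N. unfold CP; simpl. rewrite CS_cons, CS_nil, Cadd_0_r; auto.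
  simpl Cpartial. rewrite IHN, (CP_S x (S N)). reflexivity.
Qed.
Lemma sumf_RS g N : sum_f_R0 (fun i => g (S i)) N = RS (seq 1 (S N)) g.
Proof.
  induction N. simpl. rewrite RS_cons, RS_nil. ring.
  simpl sum_f_R0. rewrite IHN, (RS_S g (S N)). reflexivity.
Qed.

Lemma CCV_conv x l : CCV x l -> Cseries_conv (fun i => x (S i)) l.
Proof.
  intros H eps He. destruct (H eps He) as [N HN]. exists N. intros n Hn.
  rewrite Cpartial_CP. apply HN. lia.
Qed.
Lemma conv_CCV x l : Cseries_conv (fun i => x (S i)) l -> CCV x l.
Proof.
  intros H eps He. destruct (H eps He) as [N HN]. exists (S N). intros M HM.
  destruct M. lia. rewrite <- Cpartial_CP. apply HN. lia.
Qed.

Lemma RS_nonneg_mono g M1 M2 : (forall n, 0 <= g n) -> (M1 <= M2)%nat -> RS (seq 1 M1) g <= RS (seq 1 M2) g.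
Proof.
  intros Hg H. replace M2 with (M1 + (M2 - M1))%nat by lia. rewrite seq_split, RS_app.
  pose proof (RS_nonneg (seq (1 + M1) (M2 - M1)) g (fun x _ => Hg x)). lra.
Qed.

Lemma BND_abs x : BND (fun n => Cnorm (x n)) -> Cseries_abs_conv (fun i => x (S i)).
Proof.
  intros [B HB]. unfold Cseries_abs_conv.
  destruct (growing_cv (fun N => sum_f_R0 (fun i => Cnorm (x (S i))) N)) as [l Hl].
  - intros n. simpl. pose proof (Cnorm_nonneg (x (S (S n)))). lra.
  - exists B. intros y [N ->]. rewrite (sumf_RS (fun n => Cnorm (x n))). apply HB.
  - exists l; exact Hl.
Qed.

Definition tailind (K : nat) (g : nat -> R) (d : nat) : R := if Nat.ltb K d then g d else 0.

Lemma RS_tail_split g K M : (K <= M)%nat -> RS (seq 1 M) (tailind K g) = RS (seq 1 M) g - RS (seq 1 K) g.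
Proof.
  intros H. replace M with (K + (M - K))%nat by lia. rewrite !seq_split, !RS_app.
  rewrite (RS_ext (seq 1 K) (tailind K g) (fun _ => 0)). rewrite (RS_ext (seq (1+K) (M-K)) (tailind K g) g).
  rewrite RS_zero. ring.
  - intros d Hd. apply in_seq in Hd. unfold tailind. destruct (Nat.ltb K d) eqn:E; auto. apply Nat.ltb_ge in E; lia.
  - intros d Hd. apply in_seq in Hd. unfold tailind. destruct (Nat.ltb K d) eqn:E; auto. apply Nat.ltb_lt in E; lia.
Qed.
Lemma RS_tail_small g K M : (M <= K)%nat -> RS (seq 1 M) (tailind K g) = 0.
Proof.
  intros H. rewrite (RS_ext _ _ (fun _ => 0)). apply RS_zero.
  intros d Hd. apply in_seq in Hd. unfold tailind. destruct (Nat.ltb K d) eqn:E; auto. apply Nat.ltb_lt in E; lia.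
Qed.
Lemma tailind_nonneg g K d : (forall n, 0 <= g n) -> 0 <= tailind K g d.
Proof. intros. unfold tailind. destruct (Nat.ltb K d); auto; lra. Qed.

Lemma BND_tail g : (forall n, 0 <= g n) -> BND g ->
  forall eps, eps > 0 -> exists K, forall M, RS (seq 1 M) (tailind K g) < eps.
Proof.
  intros Hg [B HB] eps He.
  destruct (growing_cv (fun M => RS (seq 1 M) g)) as [l Hl].
  - intros n. apply RS_nonneg_mono; auto.
  - exists B. intros y [N ->]. apply HB.
  - destruct (Hl eps He) as [K HK]. exists K. intros M.
    destruct (le_lt_dec K M).
    + rewrite RS_tail_split by auto. pose proof (HK K (le_n K)). unfold R_dist in H.
      pose proof (growing_ineq (fun M => RS (seq 1 M) g) l (fun n => RS_nonneg_mono g _ _ Hg (Nat.le_succ_diag_r n)) Hl M).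
      simpl in H0. apply Rabs_def2 in H. lra.
    + rewrite RS_tail_small by lia. lra.
Qed.

Lemma tailind_mono g K1 K2 d : (forall n, 0 <= g n) -> (K1 <= K2)%nat -> tailind K2 g d <= tailind K1 g d.
Proof.
  intros Hg H. unfold tailind. destruct (Nat.ltb K2 d) eqn:E1; destruct (Nat.ltb K1 d) eqn:E2; try lra.
  apply Nat.ltb_lt in E1; apply Nat.ltb_ge in E2; lia. apply Hg.
Qed.

Lemma CP_split x m n : (m <= n)%nat -> CP x n = Cadd (CP x m) (CS (seq (S m) (n - m)) x).
Proof. intros H. unfold CP. replace n with (m + (n - m))%nat at 1 by lia. rewrite seq_split, CS_app. reflexivity. Qed.
Lemma RS_seq_tail g m n : (m <= n)%nat -> RS (seq (S m) (n - m)) g = RS (seq 1 n) (tailind m g).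
Proof.
  intros H. rewrite RS_tail_split by auto. replace n with (m + (n - m))%nat at 2 by lia.
  rewrite seq_split, RS_app. replace (1 + m)%nat with (S m) by lia. ring.
Qed.

Definition Cfst_CS l x : fst (CS l x) = RS l (fun n => fst (x n)).
Proof. induction l; auto. rewrite CS_cons, RS_cons. simpl. rewrite IHl. auto. Qed.
Definition Csnd_CS l x : snd (CS l x) = RS l (fun n => snd (x n)).
Proof. induction l; auto. rewrite CS_cons, RS_cons. simpl. rewrite IHl. auto. Qed.

Lemma Cauchy_part x (proj : Cx -> R) : (forall z, Rabs (proj z) <= Cnorm z) ->
  (forall l f, proj (CS l f) = RS l (fun n => proj (f n))) ->
  BND (fun n => Cnorm (x n)) -> Cauchy_crit (fun N => proj (CP x N)).
Proof.
  intros Hp Hl Hb eps He.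
  destruct (BND_tail _ (fun n => Cnorm_nonneg (x n)) Hb eps He) as [K HK].
  exists K. intros n m Hn Hm. unfold R_dist.
  assert (Hgen : forall a b, (K <= a)%nat -> (a <= b)%nat -> Rabs (proj (CP x b) - proj (CP x a)) < eps).
  { intros a b Ha Hab. unfold CP. rewrite !Hl.
    replace b with (a + (b - a))%nat at 1 by lia. rewrite seq_split, RS_app.
    replace (1 + a)%nat with (S a) by lia.
    replace (RS (seq 1 a) (fun n0 => proj (x n0)) + RS (seq (S a) (b - a)) (fun n0 => proj (x n0)) - RS (seq 1 a) (fun n0 => proj (x n0)))
      with (RS (seq (S a) (b - a)) (fun n0 => proj (x n0))) by ring.
    rewrite <- Hl. eapply Rle_lt_trans. apply Hp. eapply Rle_lt_trans. apply CS_norm.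
    rewrite RS_seq_tail by auto. eapply Rle_lt_trans; [|apply (HK b)].
    apply RS_le. intros. apply tailind_mono; auto. intros; apply Cnorm_nonneg. }
  destruct (le_lt_dec m n).
  - apply Hgen; auto.
  - rewrite Rabs_minus_sym. apply Hgen; lia.
Qed.

Lemma BND_CCV x : BND (fun n => Cnorm (x n)) -> exists l, CCV x l.
Proof.
  intros Hb.
  destruct (R_complete _ (Cauchy_part x fst Cnorm_ge_fst Cfst_CS Hb)) as [l1 H1].
  destruct (R_complete _ (Cauchy_part x snd Cnorm_ge_snd Csnd_CS Hb)) as [l2 H2].
  exists (l1, l2). intros eps He.
  destruct (H1 (eps/2)) as [N1 HN1]. lra. destruct (H2 (eps/2)) as [N2 HN2]. lra.
  exists (max N1 N2). intros M HM.
  eapply Rle_lt_trans. apply Cnorm_le_sum.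
  specialize (HN1 M ltac:(lia)). specialize (HN2 M ltac:(lia)). unfold R_dist in *.
  unfold Csub, Cadd, Copp; simpl. unfold Rminus in HN1, HN2. lra.
Qed.

Lemma CCV_unique x l1 l2 : CCV x l1 -> CCV x l2 -> l1 = l2.
Proof.
  intros H1 H2. destruct (Req_dec (Cnorm (Csub l1 l2)) 0) as [E|E].
  - apply Cnorm_zero_iff in E. cxd. unfold Csub, Cadd, Copp, Cx0 in E; simpl in E. inversion E. f_equal; lra.
  - pose proof (Cnorm_nonneg (Csub l1 l2)). set (e := Cnorm (Csub l1 l2)) in *.
    destruct (H1 (e/2)) as [N1 HN1]. lra. destruct (H2 (e/2)) as [N2 HN2]. lra.
    specialize (HN1 (max N1 N2) ltac:(lia)). specialize (HN2 (max N1 N2) ltac:(lia)).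
    assert (Csub l1 l2 = Cadd (Copp (Csub (CP x (max N1 N2)) l1)) (Csub (CP x (max N1 N2)) l2)) by cring.
    assert (e <= Cnorm (Csub (CP x (max N1 N2)) l1) + Cnorm (Csub (CP x (max N1 N2)) l2)).
    { unfold e. rewrite H0. rewrite <- (Cnorm_opp (Csub _ l1)). apply Cnorm_triangle. }
    lra.
Qed.

Lemma CCV_ext x y l : (forall n, (1 <= n)%nat -> x n = y n) -> CCV x l -> CCV y l.
Proof.
  intros Hxy H eps He. destruct (H eps He) as [N HN]. exists N. intros M HM.
  replace (CP y M) with (CP x M). auto. unfold CP. apply CS_ext. intros n Hn. apply in_seq in Hn. apply Hxy. lia.
Qed.
Lemma BND_ext f g : (forall n, (1 <= n)%nat -> f n = g n) -> BND f -> BND g.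
Proof.
  intros Hfg [B HB]. exists B. intros M. rewrite <- (RS_ext (seq 1 M) f g). auto.
  intros n Hn; apply in_seq in Hn; apply Hfg; lia.
Qed.
Lemma BND_le f g c : (forall n, (1 <= n)%nat -> f n <= c * g n) -> 0 <= c -> BND g -> BND f.
Proof.
  intros Hfg Hc [B HB]. exists (c * B). intros M. eapply Rle_trans.
  apply (RS_le _ f (fun n => c * g n)). intros n Hn; apply in_seq in Hn; apply Hfg; lia.
  rewrite RS_scal. apply Rmult_le_compat_l; auto.
Qed.

Lemma CCV_add x y l1 l2 : CCV x l1 -> CCV y l2 -> CCV (fun n => Cadd (x n) (y n)) (Cadd l1 l2).
Proof.
  intros H1 H2 eps He. destruct (H1 (eps/2)) as [N1 HN1]. lra. destruct (H2 (eps/2)) as [N2 HN2]. lra.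
  exists (max N1 N2). intros M HM. specialize (HN1 M ltac:(lia)). specialize (HN2 M ltac:(lia)).
  unfold CP in *. rewrite CS_add.
  replace (Csub (Cadd (CS (seq 1 M) x) (CS (seq 1 M) y)) (Cadd l1 l2)) with
    (Cadd (Csub (CS (seq 1 M) x) l1) (Csub (CS (seq 1 M) y) l2)) by cring.
  eapply Rle_lt_trans. apply Cnorm_triangle. lra.
Qed.
Lemma CCV_scal x l c : CCV x l -> CCV (fun n => Cmul c (x n)) (Cmul c l).
Proof.
  intros H eps He. destruct (H (eps / (Cnorm c + 1))) as [N HN].
  { pose proof (Cnorm_nonneg c). apply Rdiv_lt_0_compat; lra. }
  exists N. intros M HM. specialize (HN M HM). unfold CP in *. rewrite CS_scal.
  replace (Csub (Cmul c (CS (seq 1 M) x)) (Cmul c l)) with (Cmul c (Csub (CS (seq 1 M) x) l)) by cring.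
  rewrite Cnorm_mul. pose proof (Cnorm_nonneg c). pose proof (Cnorm_nonneg (Csub (CS (seq 1 M) x) l)).
  apply Rle_lt_trans with ((Cnorm c + 1) * Cnorm (Csub (CS (seq 1 M) x) l)). nra.
  apply Rmult_lt_compat_l with (r := Cnorm c + 1) in HN; [|lra].
  replace ((Cnorm c + 1) * (eps / (Cnorm c + 1))) with eps in HN by (field; lra). lra.
Qed.

Lemma CCV_norm_bound x l B : CCV x l -> (forall M, RS (seq 1 M) (fun n => Cnorm (x n)) <= B) -> Cnorm l <= B.
Proof.
  intros H HB. apply Rnot_lt_le. intros Hlt.
  destruct (H (Cnorm l - B)) as [N HN]. lra. specialize (HN N (le_n N)).
  assert (Cnorm l <= Cnorm (CP x N) + Cnorm (Csub (CP x N) l)).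
  { replace l with (Cadd (CP x N) (Copp (Csub (CP x N) l))) at 1 by cring.
    rewrite <- (Cnorm_opp (Csub (CP x N) l)). apply Cnorm_triangle. }
  pose proof (CS_norm (seq 1 N) x). specialize (HB N). unfold CP in *. lra.
Qed.

Lemma CCV_finite x K : (forall n, (K < n)%nat -> x n = Cx0) -> CCV x (CP x K).
Proof.
  intros H eps He. exists K. intros M HM. rewrite (CP_split x K M HM).
  rewrite (CS_ext _ _ (fun _ => Cx0)). rewrite CS_zero.
  replace (Csub (Cadd (CP x K) Cx0) (CP x K)) with Cx0 by cring. rewrite Cnorm_0; lra.
  intros n Hn; apply in_seq in Hn; apply H; lia.
Qed.

Lemma Cseries_sum_spec x l : CCV x l -> Cseries_sum (fun i => x (S i)) = l.
Proof.
  intros H. unfold Cseries_sum.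
  assert (Hex : exists l, Cseries_conv (fun i => x (S i)) l) by (exists l; apply CCV_conv; auto).
  pose proof (epsilon_spec C_inhabited _ Hex) as Hs.
  apply conv_CCV in Hs. eapply CCV_unique; eauto.
Qed.


Definition emi := excluded_middle_informative.

Definition dterm (a : nat -> Cx) (s : Cx) (n : nat) : Cx := Cdiv (a n) (Cpow_pos (INR n) s).
Definition conv (a b : nat -> Cx) (n : nat) : Cx :=
  CS (seq 1 n) (fun d => if excluded_middle_informative (Nat.divide d n) then Cmul (a d) (b (n / d)%nat) else Cx0).

Lemma inner_single (F : nat -> nat -> Cx) M n d : (1 <= n <= M)%nat -> (1 <= d)%nat ->
  CS (seq 1 M) (fun e => if Nat.eq_dec (d * e) n then F d e else Cx0) =
  if emi (Nat.divide d n) then F d (n / d)%nat else Cx0.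
Proof.
  intros Hn Hd.
  destruct (emi (Nat.divide d n)) as [Hdiv|Hndiv].
  - destruct Hdiv as [q Hq].
    assert (Hq' : (n / d)%nat = q) by (subst n; apply Nat.div_mul; lia).
    rewrite (CS_ext _ _ (fun e => if Nat.eq_dec e q then F d q else Cx0)).
    rewrite CS_single. rewrite Hq'.
    destruct (Nat.leb 1 q) eqn:E1; destruct (Nat.ltb q (1 + M)) eqn:E2; simpl; auto; boolsimp; subst n; nia.
    intros e He. destruct (Nat.eq_dec (d*e) n); destruct (Nat.eq_dec e q); subst; auto.
    + exfalso. apply n0. apply Nat.mul_cancel_l with d; lia.
    + exfalso. apply n0. lia.
  - rewrite (CS_ext _ _ (fun _ => Cx0)). apply CS_zero.
    intros e He. destruct (Nat.eq_dec (d*e) n); auto. exfalso. apply Hndiv. exists e. lia.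
Qed.

Lemma divsum_fiber (F : nat -> nat -> Cx) M n : (1 <= n <= M)%nat ->
  CS (seq 1 n) (fun d => if emi (Nat.divide d n) then F d (n / d)%nat else Cx0) =
  CS (seq 1 M) (fun d => CS (seq 1 M) (fun e => if Nat.eq_dec (d * e) n then F d e else Cx0)).
Proof.
  intros Hn. rewrite (CS_ext (seq 1 M) _ (fun d => if emi (Nat.divide d n) then F d (n / d)%nat else Cx0)).
  - replace (seq 1 M) with (seq 1 (n + (M - n))) by (f_equal; lia). rewrite seq_split, CS_app.
    rewrite (CS_ext (seq (1 + n) (M - n)) _ (fun _ => Cx0)). rewrite CS_zero, Cadd_0_r. reflexivity.
    intros d Hd. apply in_seq in Hd. destruct (emi (Nat.divide d n)); auto.
    apply Nat.divide_pos_le in d0; lia.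
  - intros d Hd. apply in_seq in Hd. apply inner_single; lia.
Qed.

Lemma divsum_swap (F : nat -> nat -> Cx) M :
  CS (seq 1 M) (fun n => CS (seq 1 n) (fun d => if emi (Nat.divide d n) then F d (n / d)%nat else Cx0))
  = CS (seq 1 M) (fun d => CS (seq 1 M) (fun e => if le_dec (d * e) M then F d e else Cx0)).
Proof.
  rewrite (CS_ext (seq 1 M) _ (fun n => CS (seq 1 M) (fun d => CS (seq 1 M) (fun e => if Nat.eq_dec (d * e) n then F d e else Cx0)))).
  2:{ intros n Hn. apply in_seq in Hn. apply divsum_fiber. lia. }
  rewrite CS_swap. apply CS_ext. intros d Hd. apply in_seq in Hd.
  rewrite CS_swap. apply CS_ext. intros e He. apply in_seq in He.
  rewrite (CS_ext _ _ (fun n => if Nat.eq_dec n (d*e) then F d e else Cx0)).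
  rewrite CS_single. destruct (le_dec (d*e) M).
  - destruct (Nat.leb 1 (d*e)) eqn:E1; destruct (Nat.ltb (d*e) (1 + M)) eqn:E2; simpl; auto; boolsimp; nia.
  - destruct (Nat.leb 1 (d*e)) eqn:E1; destruct (Nat.ltb (d*e) (1 + M)) eqn:E2; simpl; auto; boolsimp; nia.
  - intros n Hn. destruct (Nat.eq_dec (d*e) n); destruct (Nat.eq_dec n (d*e)); auto; lia.
Qed.

Lemma RtoC_inj a b : RtoC a = RtoC b -> a = b.
Proof. intros H. unfold RtoC in H. inversion H. auto. Qed.

Lemma divsum_swap_R (F : nat -> nat -> R) M :
  RS (seq 1 M) (fun n => RS (seq 1 n) (fun d => if emi (Nat.divide d n) then F d (n / d)%nat else 0))
  = RS (seq 1 M) (fun d => RS (seq 1 M) (fun e => if le_dec (d * e) M then F d e else 0)).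
Proof.
  apply RtoC_inj. rewrite <- !CS_RtoC.
  rewrite (CS_ext _ _ (fun n => CS (seq 1 n) (fun d => if emi (Nat.divide d n) then RtoC (F d (n / d)%nat) else Cx0))).
  pose proof (divsum_swap (fun d e => RtoC (F d e)) M) as HH. cbv beta in HH. rewrite HH.
  apply CS_ext. intros d _. rewrite <- CS_RtoC. apply CS_ext. intros e _.
  destruct (le_dec (d*e) M); reflexivity.
  intros n _. rewrite <- CS_RtoC. apply CS_ext. intros d _. destruct (emi (Nat.divide d n)); reflexivity.
Qed.

Lemma INR_pos n : (1 <= n)%nat -> 0 < INR n.
Proof. intros. apply lt_0_INR. lia. Qed.

Lemma Cinv_mul z w : z <> Cx0 -> w <> Cx0 -> Cinv (Cmul z w) = Cmul (Cinv z) (Cinv w).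
Proof.
  intros Hz Hw. apply Cinv_unique.
  replace (Cmul (Cmul z w) (Cmul (Cinv z) (Cinv w))) with (Cmul (Cmul z (Cinv z)) (Cmul w (Cinv w))) by cring.
  rewrite !Cmul_inv_r by auto. cring.
Qed.

Lemma dterm_conv a b s n : (1 <= n)%nat ->
  dterm (conv a b) s n = CS (seq 1 n) (fun d => if emi (Nat.divide d n) then Cmul (dterm a s d) (dterm b s (n / d)%nat) else Cx0).
Proof.
  intros Hn. unfold dterm, conv, Cdiv. rewrite Cmul_comm, <- CS_scal. apply CS_ext.
  intros d Hd. apply in_seq in Hd. unfold emi. destruct (excluded_middle_informative (Nat.divide d n)) as [[q Hq]|].
  - assert (Hq' : (n / d)%nat = q) by (subst n; apply Nat.div_mul; lia). rewrite Hq'.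
    assert (1 <= q)%nat by (destruct q; lia).
    replace (INR n) with (INR d * INR q) by (subst n; rewrite mult_INR; ring).
    rewrite Cpow_mulbase by (apply INR_pos; lia).
    rewrite Cinv_mul by apply Cpow_nz. cring.
  - cring.
Qed.

Lemma Cnorm_if (P : Prop) (c : {P} + {~P}) z : Cnorm (if c then z else Cx0) = if c then Cnorm z else 0.
Proof. destruct c; auto. apply Cnorm_0. Qed.

Theorem dirichlet_product a b s la lb :
  BND (fun n => Cnorm (dterm a s n)) -> BND (fun n => Cnorm (dterm b s n)) ->
  CCV (dterm a s) la -> CCV (dterm b s) lb ->
  BND (fun n => Cnorm (dterm (conv a b) s n)) /\ CCV (dterm (conv a b) s) (Cmul la lb).
Proof.
  intros Ha Hb Hla Hlb.
  set (x := dterm a s) in *. set (y := dterm b s) in *.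
  destruct Ha as [Bx HBx]. destruct Hb as [By HBy].
  assert (Hnx : forall n, 0 <= Cnorm (x n)) by (intros; apply Cnorm_nonneg).
  assert (Hny : forall n, 0 <= Cnorm (y n)) by (intros; apply Cnorm_nonneg).
  assert (HBx0 : 0 <= Bx). { specialize (HBx 0%nat). simpl in HBx. rewrite RS_nil in HBx. auto. }
  assert (HBy0 : 0 <= By). { specialize (HBy 0%nat). simpl in HBy. rewrite RS_nil in HBy. auto. }
  assert (HP : forall M, CP (dterm (conv a b) s) M =
     CS (seq 1 M) (fun d => CS (seq 1 M) (fun e => if le_dec (d * e) M then Cmul (x d) (y e) else Cx0))).
  { intros M. unfold CP. pose proof (divsum_swap (fun d e => Cmul (x d) (y e)) M) as HH. cbv beta in HH. rewrite <- HH. apply CS_ext. intros n Hn. apply in_seq in Hn.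
    apply dterm_conv. lia. }
  split.
  - exists (Bx * By). intros M.
    eapply Rle_trans with (RS (seq 1 M) (fun n => RS (seq 1 n) (fun d => if emi (Nat.divide d n) then Cnorm (x d) * Cnorm (y (n / d)%nat) else 0))).
    + apply RS_le. intros n Hn. apply in_seq in Hn. rewrite dterm_conv by lia. fold x y.
      eapply Rle_trans. apply CS_norm. apply RS_le. intros d _. rewrite Cnorm_if.
      destruct (emi (Nat.divide d n)); [rewrite Cnorm_mul|]; lra.
    + pose proof (divsum_swap_R (fun d e => Cnorm (x d) * Cnorm (y e)) M) as HH. cbv beta in HH. rewrite HH. eapply Rle_trans with (RS (seq 1 M) (fun d => RS (seq 1 M) (fun e => Cnorm (x d) * Cnorm (y e)))).
      * apply RS_le. intros d _. apply RS_le. intros e _. destruct (le_dec (d*e) M). lra.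
        apply Rmult_le_pos; auto.
      * rewrite <- RS_mul. apply Rmult_le_compat; auto. apply RS_nonneg; auto. apply RS_nonneg; auto.
  - intros eps He.
    set (Cl := Cnorm lb + Bx + By + 1).
    assert (HCl : 0 < Cl) by (unfold Cl; pose proof (Cnorm_nonneg lb); lra).
    set (e1 := eps / (3 * Cl)).
    assert (He1 : e1 > 0) by (unfold e1; apply Rdiv_lt_0_compat; lra).
    destruct (BND_tail _ Hnx (ex_intro _ Bx HBx) e1 He1) as [Kx HKx].
    destruct (BND_tail _ Hny (ex_intro _ By HBy) e1 He1) as [Ky HKy].
    destruct (Hla e1 He1) as [Na HNa]. destruct (Hlb e1 He1) as [Nb HNb].
    set (K := max Kx Ky).
    exists (max (K * K) (max Na Nb)). intros M HM.
    set (Sx := CP x M). set (Sy := CP y M).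
    assert (H1 : Cnorm (Csub (CP (dterm (conv a b) s) M) (Cmul Sx Sy)) <= e1 * By + Bx * e1).
    { rewrite HP. unfold Sx, Sy, CP. rewrite CS_mul.
      rewrite <- CS_sub. rewrite (CS_ext _ _ (fun d => CS (seq 1 M) (fun e => Csub (if le_dec (d * e) M then Cmul (x d) (y e) else Cx0) (Cmul (x d) (y e))))).
      2:{ intros d _. symmetry. apply CS_sub. }
      eapply Rle_trans. apply CS_norm.
      eapply Rle_trans with (RS (seq 1 M) (fun d => RS (seq 1 M) (fun e => tailind K (fun n => Cnorm (x n)) d * Cnorm (y e) + Cnorm (x d) * tailind K (fun n => Cnorm (y n)) e))).
      + apply RS_le. intros d Hd. apply in_seq in Hd. eapply Rle_trans. apply CS_norm. apply RS_le. intros e He2. apply in_seq in He2.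
        pose proof (tailind_nonneg (fun n => Cnorm (x n)) K d Hnx).
        pose proof (tailind_nonneg (fun n => Cnorm (y n)) K e Hny).
        destruct (le_dec (d*e) M). replace (Csub (Cmul (x d) (y e)) (Cmul (x d) (y e))) with Cx0 by cring.
        rewrite Cnorm_0. pose proof (Hnx d); pose proof (Hny e). nra.
        replace (Csub Cx0 (Cmul (x d) (y e))) with (Copp (Cmul (x d) (y e))) by cring.
        rewrite Cnorm_opp, Cnorm_mul. unfold tailind. destruct (Nat.ltb K d) eqn:E1.
        * pose proof (Hny e). pose proof (Hnx d). destruct (Nat.ltb K e); nra.
        * destruct (Nat.ltb K e) eqn:E2. pose proof (Hnx d); pose proof (Hny e); nra.
          apply Nat.ltb_ge in E1, E2. exfalso. apply n. assert (M >= K * K)%nat by lia.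
          assert (d * e <= K * K)%nat by (apply Nat.mul_le_mono; lia). lia.
      + rewrite (RS_ext (seq 1 M) _ (fun d => RS (seq 1 M) (fun e => tailind K (fun n => Cnorm (x n)) d * Cnorm (y e)) + RS (seq 1 M) (fun e => Cnorm (x d) * tailind K (fun n => Cnorm (y n)) e))).
        2:{ intros; apply RS_add. }
        rewrite RS_add, <- !RS_mul.
        assert (RS (seq 1 M) (tailind K (fun n => Cnorm (x n))) <= e1).
        { left. eapply Rle_lt_trans; [|apply (HKx M)]. apply RS_le. intros; apply tailind_mono; auto; lia. }
        assert (RS (seq 1 M) (tailind K (fun n => Cnorm (y n))) <= e1).
        { left. eapply Rle_lt_trans; [|apply (HKy M)]. apply RS_le. intros; apply tailind_mono; auto; lia. }
        pose proof (RS_nonneg (seq 1 M) _ (fun d _ => tailind_nonneg (fun n => Cnorm (x n)) K d Hnx)).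
        pose proof (RS_nonneg (seq 1 M) _ (fun d _ => tailind_nonneg (fun n => Cnorm (y n)) K d Hny)).
        pose proof (HBx M). pose proof (HBy M).
        pose proof (RS_nonneg (seq 1 M) _ (fun d _ => Hnx d)). pose proof (RS_nonneg (seq 1 M) _ (fun d _ => Hny d)).
        apply Rplus_le_compat; apply Rmult_le_compat; auto. }
    assert (H2 : Cnorm (Csub (Cmul Sx Sy) (Cmul la lb)) <= Bx * e1 + Cnorm lb * e1).
    { replace (Csub (Cmul Sx Sy) (Cmul la lb)) with (Cadd (Cmul Sx (Csub Sy lb)) (Cmul lb (Csub Sx la))) by cring.
      eapply Rle_trans. apply Cnorm_triangle. rewrite !Cnorm_mul.
      assert (Cnorm Sx <= Bx) by (eapply Rle_trans; [apply CS_norm | apply HBx]).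
      specialize (HNa M ltac:(lia)). specialize (HNb M ltac:(lia)). fold Sx in HNa. fold Sy in HNb.
      pose proof (Cnorm_nonneg Sx). pose proof (Cnorm_nonneg lb).
      pose proof (Cnorm_nonneg (Csub Sy lb)). pose proof (Cnorm_nonneg (Csub Sx la)).
      apply Rplus_le_compat; apply Rmult_le_compat; auto; lra. }
    replace (Csub (CP (dterm (conv a b) s) M) (Cmul la lb)) with
      (Cadd (Csub (CP (dterm (conv a b) s) M) (Cmul Sx Sy)) (Csub (Cmul Sx Sy) (Cmul la lb))) by cring.
    eapply Rle_lt_trans. apply Cnorm_triangle.
    assert (e1 * By + Bx * e1 + (Bx * e1 + Cnorm lb * e1) <= e1 * (2 * Cl)) by (unfold Cl; pose proof (Cnorm_nonneg lb); nra).
    assert (e1 * (2 * Cl) < eps) by (unfold e1; field_simplify; lra).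
    lra.
Qed.


Lemma exp_le x y : x <= y -> exp x <= exp y.
Proof. intros [H|H]. left; apply exp_increasing; auto. subst; lra. Qed.
Lemma ln_nonneg x : 1 <= x -> 0 <= ln x.
Proof. intros [H|H]. left. rewrite <- ln_1. apply ln_increasing; lra. subst. rewrite ln_1; lra. Qed.
Lemma ln_le_sub1 x : 0 < x -> ln x <= x - 1.
Proof. intros H. pose proof (exp_ineq1_le (ln x)). rewrite exp_ln in H0 by auto. lra. Qed.
Lemma exp_pow_nat x j : exp x ^ j = exp (INR j * x).
Proof. induction j. simpl. rewrite Rmult_0_l, exp_0; auto. rewrite S_INR. simpl. rewrite IHj, <- exp_plus. f_equal; ring. Qed.
Lemma ln_INR_nonneg n : (1 <= n)%nat -> 0 <= ln (INR n).
Proof. intros. apply ln_nonneg. apply (le_INR 1). auto. Qed.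

Lemma pseries_key a n : 0 < a -> (2 <= n)%nat ->
  a * exp (- (a + 1) * ln (INR n)) <= exp (- a * ln (INR n - 1)) - exp (- a * ln (INR n)).
Proof.
  intros Ha Hn.
  assert (Hn2 : 2 <= INR n) by (apply (le_INR 2); auto).
  set (L := ln (INR n)). set (L1 := ln (INR n - 1)).
  assert (HL : L - L1 >= / INR n).
  { unfold L, L1. assert (Hpos: 0 < (INR n - 1) * / INR n) by (apply Rmult_lt_0_compat; [lra| apply Rinv_0_lt_compat; lra]).
    pose proof (ln_le_sub1 _ Hpos) as H. rewrite ln_mult, ln_Rinv in H by (try apply Rinv_0_lt_compat; lra). assert ((INR n - 1) * / INR n - 1 = - / INR n) by (field; lra). lra. }
  replace (exp (- a * L1)) with (exp (- a * L) * exp (a * (L - L1))) by (rewrite <- exp_plus; f_equal; ring).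
  pose proof (exp_ineq1_le (a * (L - L1))).
  replace (exp (- (a + 1) * L)) with (exp (- a * L) * / INR n).
  2:{ replace (- (a+1) * L) with (- a * L + - L) by ring. rewrite exp_plus, exp_Ropp. f_equal.
      unfold L. rewrite exp_ln by lra. auto. }
  pose proof (exp_pos (- a * L)). assert (a * (L - L1) >= a * / INR n) by (apply Rmult_ge_compat_l; lra).
  nra.
Qed.

Lemma pseries_bound p M : 1 < p -> (1 <= M)%nat ->
  RS (seq 1 M) (fun n => exp (- p * ln (INR n))) <= 1 + (1 - exp (- (p - 1) * ln (INR M))) / (p - 1).
Proof.
  intros Hp HM. induction M. lia.
  destruct M.
  - simpl. rewrite RS_cons, RS_nil. change (INR 1) with 1. rewrite ln_1. rewrite !Rmult_0_r, exp_0. replace ((1-1)/(p-1)) with 0 by (field; lra). lra.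
  - rewrite RS_S. specialize (IHM ltac:(lia)).
    pose proof (pseries_key (p - 1) (S (S M)) ltac:(lra) ltac:(lia)).
    replace (p - 1 + 1) with p in H by ring.
    replace (INR (S (S M)) - 1) with (INR (S M)) in H by (rewrite (S_INR (S M)); ring).
    assert (exp (- p * ln (INR (S (S M)))) <= (exp (- (p - 1) * ln (INR (S M))) - exp (- (p - 1) * ln (INR (S (S M))))) / (p - 1)).
    { apply (Rmult_le_reg_l (p - 1)). lra. field_simplify; lra. }
    assert (1 + (1 - exp (- (p - 1) * ln (INR (S M)))) / (p - 1) + (exp (- (p - 1) * ln (INR (S M))) - exp (- (p - 1) * ln (INR (S (S M))))) / (p - 1)
      = 1 + (1 - exp (- (p - 1) * ln (INR (S (S M))))) / (p - 1)) by (field; lra).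
    lra.
Qed.

Lemma pseries_BND p : 1 < p -> BND (fun n => exp (- p * ln (INR n))).
Proof.
  intros Hp. exists (1 + 1 / (p - 1)). intros M. destruct M.
  - simpl. rewrite RS_nil. assert (0 < 1 / (p - 1)) by (apply Rdiv_lt_0_compat; lra). lra.
  - eapply Rle_trans. apply pseries_bound; auto; lia.
    pose proof (exp_pos (- (p - 1) * ln (INR (S M)))).
    assert ((1 - exp (- (p - 1) * ln (INR (S M)))) / (p - 1) <= 1 / (p - 1)).
    { unfold Rdiv. apply Rmult_le_compat_r. left; apply Rinv_0_lt_compat; lra. lra. }
    lra.
Qed.

Lemma log_pow_bound (eps : R) (j : nat) : 0 < eps ->
  exists C, 0 <= C /\ forall L, 0 <= L -> L ^ j <= C * exp (eps * L).
Proof.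
  intros He. set (J := INR (S j)). assert (HJ : 0 < J) by (apply lt_0_INR; lia).
  exists ((J / eps) ^ j). split. apply pow_le. left; apply Rdiv_lt_0_compat; lra.
  intros L HL. set (y := eps * L / J).
  assert (Hy : 0 <= y) by (unfold y; apply Rmult_le_pos; [nra| left; apply Rinv_0_lt_compat; lra]).
  assert (L = J / eps * y) by (unfold y; field; lra).
  rewrite H at 1. rewrite Rpow_mult_distr. apply Rmult_le_compat_l. apply pow_le. left; apply Rdiv_lt_0_compat; lra.
  assert (Hey : y <= exp y) by (pose proof (exp_ineq1_le y); lra).
  apply Rle_trans with (exp y ^ j). apply pow_incr; lra.
  rewrite exp_pow_nat. apply exp_le. unfold y.
  assert (INR j <= J) by (unfold J; rewrite S_INR; lra).
  assert (0 <= eps * L) by nra.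
  replace (INR j * (eps * L / J)) with ((INR j / J) * (eps * L)) by (field; lra).
  assert (INR j / J <= 1). { apply (Rmult_le_reg_l J); auto. field_simplify; lra. }
  assert (0 <= INR j / J) by (apply Rmult_le_pos; [apply pos_INR| left; apply Rinv_0_lt_compat; lra]).
  nra.
Qed.

Lemma logseries_BND (sigma : R) (j : nat) : 1 < sigma ->
  BND (fun n => ln (INR n) ^ j * exp (- sigma * ln (INR n))).
Proof.
  intros Hs. destruct (log_pow_bound ((sigma - 1) / 2) j) as [C [HC HCb]]. lra.
  apply BND_le with (c := C) (g := fun n => exp (- ((sigma + 1) / 2) * ln (INR n))); auto.
  - intros n Hn. pose proof (ln_INR_nonneg n Hn). specialize (HCb _ H).
    pose proof (exp_pos (- sigma * ln (INR n))).
    eapply Rle_trans. apply Rmult_le_compat_r. lra. apply HCb.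
    rewrite Rmult_assoc, <- exp_plus. right. f_equal. f_equal. field.
  - apply pseries_BND. lra.
Qed.

Lemma dterm_norm a s n : (1 <= n)%nat -> Cnorm (dterm a s n) = Cnorm (a n) * exp (- fst s * ln (INR n)).
Proof.
  intros Hn. unfold dterm, Cdiv. rewrite Cnorm_mul, Cnorm_inv by apply Cpow_nz. rewrite Cnorm_Cpow.
  f_equal. rewrite <- exp_Ropp. f_equal. ring.
Qed.

Lemma BND_dterm_le a s (c : R) (j : nat) : 1 < fst s -> 0 <= c ->
  (forall n, (1 <= n)%nat -> Cnorm (a n) <= c * ln (INR n) ^ j) ->
  BND (fun n => Cnorm (dterm a s n)).
Proof.
  intros Hs Hc H. apply BND_le with (c := c) (g := fun n => ln (INR n) ^ j * exp (- fst s * ln (INR n))); auto.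
  - intros n Hn. rewrite dterm_norm by auto. rewrite <- Rmult_assoc. apply Rmult_le_compat_r.
    left; apply exp_pos. apply H; auto.
  - apply logseries_BND; auto.
Qed.

Lemma BND_finite f K : (forall n, 0 <= f n) -> (forall n, (K < n)%nat -> f n = 0) -> BND f.
Proof.
  intros Hf HK. exists (RS (seq 1 K) f). intros M. destruct (le_lt_dec M K).
  - apply RS_nonneg_mono; auto.
  - replace (seq 1 M) with (seq 1 (K + (M - K))) by (f_equal; lia). rewrite seq_split, RS_app.
    rewrite (RS_ext (seq (1 + K) (M - K)) _ (fun _ => 0)). rewrite RS_zero. lra. intros n Hn. apply in_seq in Hn. apply HK. lia.
Qed.


Lemma mvt_bound (f f' : R -> R) x M :
  (forall c, derivable_pt_lim f c (f' c)) -> (forall c, Rabs c <= Rabs x -> Rabs (f' c) <= M) ->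
  Rabs (f x - f 0) <= M * Rabs x.
Proof.
  intros Hd Hb. destruct (Rtotal_order x 0) as [Hx|[Hx|Hx]].
  - destruct (MVT_cor2 f f' x 0 Hx (fun c _ => Hd c)) as [c [Hc1 Hc2]].
    replace (f x - f 0) with (- (f 0 - f x)) by ring. rewrite Rabs_Ropp, Hc1, Rabs_mult.
    replace (0 - x) with (- x) by ring. rewrite Rabs_Ropp.
    apply Rmult_le_compat_r. apply Rabs_pos. apply Hb. rewrite !Rabs_left by lra. lra.
  - subst. replace (f 0 - f 0) with 0 by ring. rewrite Rabs_R0, Rmult_0_r. lra.
  - destruct (MVT_cor2 f f' 0 x Hx (fun c _ => Hd c)) as [c [Hc1 Hc2]].
    rewrite Hc1, Rabs_mult. replace (x - 0) with x by ring.
    apply Rmult_le_compat_r. apply Rabs_pos. apply Hb. destruct (Rle_dec 0 c).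
    rewrite !Rabs_right by lra. lra. lra.
Qed.

Lemma exp_abs_le x : exp x <= exp (Rabs x).
Proof. apply exp_le. apply Rle_abs. Qed.

Lemma exp_sub1_bound x : Rabs (exp x - 1) <= exp (Rabs x) * Rabs x.
Proof.
  replace (exp x - 1) with (exp x - exp 0) by (rewrite exp_0; ring). apply (mvt_bound exp exp x). apply derivable_pt_lim_exp.
  intros c Hc. rewrite Rabs_right by (left; apply exp_pos). eapply Rle_trans. apply exp_abs_le. apply exp_le; auto.
Qed.
Lemma exp_sub2_bound x : Rabs (exp x - 1 - x) <= exp (Rabs x) * (x * x).
Proof.
  replace (exp x - 1 - x) with ((exp x - x) - (exp 0 - 0)) by (rewrite exp_0; ring).
  replace (x * x) with (Rabs x * Rabs x) by (rewrite <- Rabs_mult; apply Rabs_pos_eq; nra).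
  rewrite <- Rmult_assoc.
  apply (mvt_bound (fun t => exp t - t) (fun t => exp t - 1) x).
  - intros c. apply (derivable_pt_lim_minus exp id c (exp c) 1). apply derivable_pt_lim_exp. apply derivable_pt_lim_id.
  - intros c Hc. eapply Rle_trans. apply exp_sub1_bound. apply Rmult_le_compat; auto. left; apply exp_pos. apply Rabs_pos. apply exp_le; auto.
Qed.
Lemma sin_abs_bound x : Rabs (sin x) <= Rabs x.
Proof.
  replace (sin x) with (sin x - sin 0) by (rewrite sin_0; ring). rewrite <- (Rmult_1_l (Rabs x)).
  apply (mvt_bound sin cos x). apply derivable_pt_lim_sin. intros. apply Rabs_le. apply COS_bound.
Qed.
Lemma cos_sub1_bound x : Rabs (cos x - 1) <= x * x.
Proof.
  replace (cos x - 1) with (cos x - cos 0) by (rewrite cos_0; ring).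
  replace (x * x) with (Rabs x * Rabs x) by (rewrite <- Rabs_mult; apply Rabs_pos_eq; nra).
  apply (mvt_bound cos (fun t => - sin t) x). apply derivable_pt_lim_cos.
  intros c Hc. rewrite Rabs_Ropp. eapply Rle_trans. apply sin_abs_bound. auto.
Qed.
Lemma sin_sub_bound x : Rabs (sin x - x) <= 2 * (x * x).
Proof.
  replace (sin x - x) with ((sin x - x) - (sin 0 - 0)) by (rewrite sin_0; ring).
  replace (x * x) with (Rabs x * Rabs x) by (rewrite <- Rabs_mult; apply Rabs_pos_eq; nra).
  rewrite <- Rmult_assoc.
  apply (mvt_bound (fun t => sin t - t) (fun t => cos t - 1) x).
  - intros c. apply (derivable_pt_lim_minus sin id c (cos c) 1). apply derivable_pt_lim_sin. apply derivable_pt_lim_id.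
  - intros c Hc. destruct (Rle_dec (Rabs x) 1).
    + eapply Rle_trans. apply cos_sub1_bound.
      assert (c * c <= Rabs x * Rabs x) by (pose proof (Rabs_pos c); pose proof (Rsqr_abs c); unfold Rsqr in *; nra).
      pose proof (Rabs_pos x). nra.
    + pose proof (COS_bound c). apply Rabs_le. split; lra.
Qed.

Definition CE (w : Cx) : Cx := Csub (Csub (Cexp w) Cx1) w.

Lemma CE_bound w : Cnorm (CE w) <= 4 * exp (Rabs (fst w)) * (Cnorm w * Cnorm w).
Proof.
  destruct w as [a b]. rewrite Cnorm_sq. simpl. eapply Rle_trans. apply Cnorm_le_sum.
  unfold CE, Cexp, Csub, Cadd, Copp, Cx1; simpl.
  pose proof (exp_sub2_bound a). pose proof (exp_sub1_bound a). pose proof (cos_sub1_bound b).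
  pose proof (sin_abs_bound b). pose proof (sin_sub_bound b).
  pose proof (exp_abs_le a). pose proof (exp_pos a). pose proof (exp_pos (Rabs a)).
  assert (1 <= exp (Rabs a)) by (rewrite <- exp_0; apply exp_le; apply Rabs_pos).
  assert (G1 : Rabs (exp a * cos b + - (1) + - a) <= exp (Rabs a) * (a * a) + exp (Rabs a) * (b * b)).
  { replace (exp a * cos b + - (1) + - a) with ((exp a - 1 - a) + exp a * (cos b - 1)) by ring.
    eapply Rle_trans. apply Rabs_triang. rewrite Rabs_mult, (Rabs_right (exp a)) by lra.
    apply Rplus_le_compat; auto. apply Rmult_le_compat; auto; try apply Rabs_pos; lra. }
  assert (G2 : Rabs (exp a * sin b + - 0 + - b) <= exp (Rabs a) * Rabs a * Rabs b + 2 * (b * b)).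
  { replace (exp a * sin b + - 0 + - b) with ((exp a - 1) * sin b + (sin b - b)) by ring.
    eapply Rle_trans. apply Rabs_triang. rewrite Rabs_mult. apply Rplus_le_compat; auto.
    apply Rmult_le_compat; auto; apply Rabs_pos. }
  assert (Rabs a * Rabs b <= a * a + b * b).
  { pose proof (Rabs_pos a); pose proof (Rabs_pos b).
    replace (a*a) with (Rabs a * Rabs a) by (rewrite <- Rabs_mult; apply Rabs_pos_eq; nra).
    replace (b*b) with (Rabs b * Rabs b) by (rewrite <- Rabs_mult; apply Rabs_pos_eq; nra). nra. }
  assert (0 <= a * a) by nra. assert (0 <= b * b) by nra.
  assert (exp (Rabs a) * Rabs a * Rabs b <= exp (Rabs a) * (a * a + b * b)).
  { rewrite Rmult_assoc. apply Rmult_le_compat_l; lra. }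
  assert (2 * (b * b) <= 2 * exp (Rabs a) * (b * b)) by nra.
  nra.
Qed.

Definition Lj (j : nat) (n : nat) : Cx := RtoC ((- ln (INR n)) ^ j).
Definition Zf (j : nat) (z : Cx) : Cx := Cseries_sum (fun i => dterm (Lj j) z (S i)).

Lemma Lj_norm j n : (1 <= n)%nat -> Cnorm (Lj j n) = ln (INR n) ^ j.
Proof.
  intros. unfold Lj. rewrite Cnorm_RtoC. rewrite <- RPow_abs. rewrite Rabs_Ropp. rewrite Rabs_pos_eq; auto.
  apply ln_INR_nonneg; auto.
Qed.

Lemma Zf_BND j z : 1 < fst z -> BND (fun n => Cnorm (dterm (Lj j) z n)).
Proof. intros. apply BND_dterm_le with (c := 1) (j := j); auto; try lra. intros. rewrite Lj_norm by auto. lra. Qed.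

Lemma Zf_CCV j z : 1 < fst z -> CCV (dterm (Lj j) z) (Zf j z).
Proof.
  intros H. destruct (BND_CCV _ (Zf_BND j z H)) as [l Hl]. unfold Zf. rewrite (Cseries_sum_spec _ _ Hl). auto.
Qed.

Lemma Cnorm_fst_le z : Rabs (fst z) <= Cnorm z.
Proof. apply Cnorm_ge_fst. Qed.

Lemma deriv_term j z h n : (1 <= n)%nat -> h <> Cx0 ->
  Csub (Cmul (Csub (dterm (Lj j) (Cadd z h) n) (dterm (Lj j) z n)) (Cinv h)) (dterm (Lj (S j)) z n)
  = Cmul (Cmul (Lj j n) (Cinv (Cpow_pos (INR n) z))) (Cmul (CE (Cmul (RtoC (- ln (INR n))) h)) (Cinv h)).
Proof.
  intros Hn Hh. unfold dterm, Cdiv, CE.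
  rewrite Cpow_add, Cinv_mul by apply Cpow_nz.
  rewrite (Cinv_Cpow _ h). unfold Cpow_pos at 2.
  replace (Cmul (RtoC (ln (INR n))) (Copp h)) with (Cmul (RtoC (- ln (INR n))) h) by cring.
  replace (Lj (S j) n) with (Cmul (Lj j n) (RtoC (- ln (INR n)))) by (unfold Lj; rewrite <- RtoC_mul; f_equal; simpl; ring).
  pose proof (Cmul_inv_r h Hh) as Hhi. set (hi := Cinv h) in *. set (E := Cexp (Cmul (RtoC (- ln (INR n))) h)).
  set (Pz := Cinv (Cpow_pos (INR n) z)). set (L := RtoC (- ln (INR n))).
  transitivity (Cadd (Cmul (Cmul (Lj j n) Pz) (Cmul (Csub (Csub E Cx1) (Cmul L h)) hi))
                     (Cmul (Cmul (Cmul (Lj j n) Pz) L) (Csub (Cmul h hi) Cx1))).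
  - cring.
  - rewrite Hhi. cring.
Qed.

Lemma Zf_deriv j z : 1 < fst z -> Cderivable_lim (Zf j) z (Zf (S j) z).
Proof.
  intros Hz eps He.
  set (sigma := fst z). set (d0 := (sigma - 1) / 2).
  destruct (logseries_BND ((sigma + 1) / 2) (j + 2) ltac:(unfold sigma; lra)) as [K HK].
  assert (HK0 : 0 <= K). { specialize (HK 0%nat). simpl in HK. rewrite RS_nil in HK. auto. }
  exists (Rmin d0 (eps / (4 * K + 1))). split.
  { apply Rmin_pos. unfold d0, sigma; lra. apply Rdiv_lt_0_compat; lra. }
  intros h Hh0 Hh.
  assert (Hhd0 : Cnorm h < d0) by (eapply Rlt_le_trans; [apply Hh| apply Rmin_l]).
  assert (Hhe : Cnorm h < eps / (4 * K + 1)) by (eapply Rlt_le_trans; [apply Hh| apply Rmin_r]).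
  assert (Hzh : 1 < fst (Cadd z h)). { pose proof (Cnorm_fst_le h). pose proof (Rle_abs (- fst h)). rewrite Rabs_Ropp in H0. unfold Cadd; simpl. unfold d0, sigma in Hhd0. lra. }
  pose proof (Cnorm_pos h Hh0) as Hhp.
  assert (HX : CCV (fun n => Csub (Cmul (Csub (dterm (Lj j) (Cadd z h) n) (dterm (Lj j) z n)) (Cinv h)) (dterm (Lj (S j)) z n))
                 (Csub (Cdiv (Csub (Zf j (Cadd z h)) (Zf j z)) h) (Zf (S j) z))).
  { unfold Cdiv. unfold Csub at 1 2.
    apply CCV_add. 2:{ replace (Copp (Zf (S j) z)) with (Cmul (RtoC (-1)) (Zf (S j) z)) by cring.
       apply CCV_ext with (x := fun n => Cmul (RtoC (-1)) (dterm (Lj (S j)) z n)). intros; cring.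
       apply CCV_scal. apply Zf_CCV; auto. }
    rewrite Cmul_comm. apply CCV_ext with (x := fun n => Cmul (Cinv h) (Cadd (dterm (Lj j) (Cadd z h) n) (Cmul (RtoC (-1)) (dterm (Lj j) z n)))).
    intros; cring. apply CCV_scal. replace (Csub (Zf j (Cadd z h)) (Zf j z)) with (Cadd (Zf j (Cadd z h)) (Cmul (RtoC (-1)) (Zf j z))) by cring.
    apply CCV_add. apply Zf_CCV; auto. apply CCV_scal. apply Zf_CCV; auto. }
  eapply Rle_lt_trans. apply (CCV_norm_bound _ _ (4 * Cnorm h * K) HX).
  - intros M. eapply Rle_trans with (RS (seq 1 M) (fun n => 4 * Cnorm h * (ln (INR n) ^ (j + 2) * exp (- ((sigma + 1) / 2) * ln (INR n))))).
    + apply RS_le. intros n Hn. apply in_seq in Hn. rewrite deriv_term by (auto; lia).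
      rewrite !Cnorm_mul, Lj_norm by lia. rewrite Cnorm_inv by apply Cpow_nz. rewrite Cnorm_inv by auto.
      rewrite Cnorm_Cpow. fold sigma.
      set (L := ln (INR n)). assert (HL : 0 <= L) by (apply ln_INR_nonneg; lia).
      pose proof (CE_bound (Cmul (RtoC (- L)) h)) as HCE.
      rewrite Cnorm_mul, Cnorm_RtoC, Rabs_Ropp, (Rabs_pos_eq L HL) in HCE.
      assert (Hf : Rabs (fst (Cmul (RtoC (- L)) h)) <= L * d0).
      { unfold Cmul, RtoC; simpl. replace (- L * fst h - 0 * snd h) with (- L * fst h) by ring.
        rewrite Rabs_mult, Rabs_Ropp, Rabs_pos_eq by auto. apply Rmult_le_compat_l; auto.
        pose proof (Cnorm_fst_le h). lra. }
      assert (Hexp : exp (Rabs (fst (Cmul (RtoC (- L)) h))) <= exp (L * d0)) by (apply exp_le; auto).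
      rewrite <- exp_Ropp.
      set (N := Cnorm (CE (Cmul (RtoC (- L)) h))) in *.
      assert (N * / Cnorm h <= 4 * exp (L * d0) * (L * L) * Cnorm h).
      { pose proof (exp_pos (Rabs (fst (Cmul (RtoC (- L)) h)))).
        assert (0 <= L * Cnorm h) by (apply Rmult_le_pos; auto; lra).
        assert (N <= 4 * exp (L * d0) * (L * L) * Cnorm h * Cnorm h).
        { eapply Rle_trans. apply HCE.
          replace (4 * exp (L * d0) * (L * L) * Cnorm h * Cnorm h) with (4 * exp (L * d0) * ((L * Cnorm h) * (L * Cnorm h))) by ring.
          apply Rmult_le_compat_r. nra. lra. }
        replace (4 * exp (L * d0) * (L * L) * Cnorm h) with ((4 * exp (L * d0) * (L * L) * Cnorm h * Cnorm h) * / Cnorm h) by (field; lra).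
        apply Rmult_le_compat_r. left; apply Rinv_0_lt_compat; auto. auto. }
      assert (Hee : exp (- (L * sigma)) * exp (L * d0) = exp (- ((sigma + 1) / 2) * L)).
      { rewrite <- exp_plus. f_equal. unfold d0, L. field. }
      replace (ln (INR n)) with L by reflexivity.
      assert (0 <= L ^ j) by (apply pow_le; auto).
      pose proof (exp_pos (- (L * sigma))). assert (0 <= N * / Cnorm h).
      { apply Rmult_le_pos. apply Cnorm_nonneg. left; apply Rinv_0_lt_compat; auto. }
      replace (L ^ (j + 2)) with (L ^ j * (L * L)) by (rewrite pow_add; simpl; ring).
      replace (L ^ j * exp (- (L * sigma)) * (N * / Cnorm h)) with (L ^ j * exp (- (L * sigma)) * (N * / Cnorm h)) by ring.
      apply Rle_trans with (L ^ j * exp (- (L * sigma)) * (4 * exp (L * d0) * (L * L) * Cnorm h)).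
      * apply Rmult_le_compat_l; auto. apply Rmult_le_pos; lra.
      * right. rewrite <- Hee. ring.
    + rewrite RS_scal. apply Rmult_le_compat_l. pose proof (Cnorm_nonneg h); lra. apply HK.
  - assert (4 * Cnorm h * K <= 4 * K * (eps / (4 * K + 1))).
    { pose proof (Cnorm_nonneg h). replace (4 * Cnorm h * K) with (4 * K * Cnorm h) by ring.
      apply Rmult_le_compat_l; lra. }
    assert (4 * K * (eps / (4 * K + 1)) < eps).
    { apply (Rmult_lt_reg_r (4 * K + 1)). lra. field_simplify; lra. }
    lra.
Qed.


Lemma Cderiv_lim_unique f z l1 l2 : Cderivable_lim f z l1 -> Cderivable_lim f z l2 -> l1 = l2.
Proof.
  intros H1 H2. destruct (Req_dec (Cnorm (Csub l1 l2)) 0) as [E|E].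
  - apply Cnorm_zero_iff in E. cxd. unfold Csub, Cadd, Copp, Cx0 in E; simpl in E. inversion E. f_equal; lra.
  - pose proof (Cnorm_nonneg (Csub l1 l2)). set (e := Cnorm (Csub l1 l2)) in *.
    destruct (H1 (e/2)) as [d1 [Hd1 HH1]]. lra. destruct (H2 (e/2)) as [d2 [Hd2 HH2]]. lra.
    set (h := RtoC (Rmin d1 d2 / 2)).
    assert (Hm : 0 < Rmin d1 d2) by (apply Rmin_pos; lra).
    assert (Hh0 : h <> Cx0). { unfold h, RtoC, Cx0. intros Hq; inversion Hq. lra. }
    assert (Hhn : Cnorm h = Rmin d1 d2 / 2) by (unfold h; rewrite Cnorm_RtoC; apply Rabs_pos_eq; lra).
    specialize (HH1 h Hh0 ltac:(rewrite Hhn; pose proof (Rmin_l d1 d2); lra)).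
    specialize (HH2 h Hh0 ltac:(rewrite Hhn; pose proof (Rmin_r d1 d2); lra)).
    set (q := Cdiv (Csub (f (Cadd z h)) (f z)) h) in *.
    assert (Csub l1 l2 = Cadd (Copp (Csub q l1)) (Csub q l2)) by cring.
    assert (e <= Cnorm (Csub q l1) + Cnorm (Csub q l2)).
    { unfold e. rewrite H0. rewrite <- (Cnorm_opp (Csub q l1)). apply Cnorm_triangle. }
    lra.
Qed.

Lemma Cderiv_spec f z l : Cderivable_lim f z l -> Cderiv f z = l.
Proof.
  intros H. unfold Cderiv. assert (Hex : exists l, Cderivable_lim f z l) by eauto.
  pose proof (epsilon_spec C_inhabited _ Hex). eapply Cderiv_lim_unique; eauto.
Qed.

Lemma Cderiv_local f g z l : (forall w, 1 < fst w -> f w = g w) -> 1 < fst z ->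
  Cderivable_lim g z l -> Cderivable_lim f z l.
Proof.
  intros Hfg Hz H eps He. destruct (H eps He) as [d [Hd Hdd]].
  exists (Rmin d (fst z - 1)). split. apply Rmin_pos; lra.
  intros h Hh0 Hh. rewrite !Hfg. apply Hdd; auto. eapply Rlt_le_trans; [apply Hh| apply Rmin_l].
  auto. unfold Cadd; simpl. pose proof (Cnorm_ge_fst h). pose proof (Rle_abs (- fst h)). rewrite Rabs_Ropp in H1.
  pose proof (Rmin_r d (fst z - 1)). lra.
Qed.

Lemma zeta_Zf z : 1 < fst z -> zeta z = Zf 0 z.
Proof.
  intros Hz. unfold zeta, Zf. f_equal. apply functional_extensionality. intros i.
  unfold dterm, Lj, Cdiv. simpl. replace (RtoC 1) with Cx1 by reflexivity. rewrite Cmul_1_l. auto.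
Qed.

Lemma Cderiv_n_zeta j z : 1 < fst z -> Cderiv_n j zeta z = Zf j z.
Proof.
  revert z. induction j; intros z Hz.
  - simpl. apply zeta_Zf; auto.
  - simpl. apply Cderiv_spec. apply Cderiv_local with (g := Zf j); auto. apply Zf_deriv; auto.
Qed.

Lemma zeta_CCV z : 1 < fst z -> CCV (dterm (fun _ => Cx1) z) (zeta z).
Proof.
  intros Hz. rewrite zeta_Zf by auto. apply CCV_ext with (x := dterm (Lj 0) z). 2: apply Zf_CCV; auto.
  intros; reflexivity.
Qed.


Fixpoint lpf_from (d f n : nat) : nat :=
  match f with
  | O => n
  | S f' => if Nat.eqb (n mod d) 0 then d else lpf_from (S d) f' n
  end.
Definition lpf (n : nat) : nat := lpf_from 2 n n.

Definition lpf_prop (n r : nat) : Prop :=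
  (2 <= r)%nat /\ Nat.divide r n /\ forall e, (2 <= e)%nat -> Nat.divide e n -> (r <= e)%nat.

Lemma lpf_from_spec n : forall f d, (2 <= d)%nat -> (d <= n)%nat -> (n < d + f)%nat ->
  (forall e, (2 <= e < d)%nat -> ~ Nat.divide e n) -> lpf_prop n (lpf_from d f n).
Proof.
  induction f; intros d H2 Hdn Hf Hnd. lia.
  simpl. destruct (Nat.eqb (n mod d) 0) eqn:E.
  - apply Nat.eqb_eq in E. apply Nat.mod_divide in E; [|lia]. split; auto. split; auto.
    intros e He Hdiv. destruct (le_lt_dec d e); auto. exfalso. apply (Hnd e); auto.
  - apply Nat.eqb_neq in E. apply IHf; try lia.
    + assert (d <> n). { intros ->. rewrite Nat.mod_same in E; lia. } lia.
    + intros e He Hdiv. destruct (Nat.eq_dec e d). subst. apply E. apply Nat.mod_divide; auto; lia.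
      apply (Hnd e); auto; lia.
Qed.

Lemma lpf_spec n : (2 <= n)%nat -> lpf_prop n (lpf n).
Proof. intros. apply lpf_from_spec; try lia. Qed.

Lemma lpf_char x q : (1 <= x)%nat -> lpf_prop x q -> lpf x = q.
Proof.
  intros Hx [Hq [Hqx Hmin]].
  assert (2 <= x)%nat by (apply Nat.divide_pos_le in Hqx; lia).
  destruct (lpf_spec x H) as [H1 [H2 H3]].
  specialize (Hmin _ H1 H2). specialize (H3 _ Hq Hqx). lia.
Qed.

Fixpoint muf (f n : nat) : R :=
  match f with
  | O => 0
  | S f' => if Nat.eqb n 1 then 1 else if Nat.eqb n 0 then 0 else
            if Nat.eqb (n mod (lpf n * lpf n)) 0 then 0 else - muf f' (n / lpf n)
  end.
Definition mu (n : nat) : R := muf n n.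

Lemma muf_indep : forall f1 f2 n, (n <= f1)%nat -> (n <= f2)%nat -> muf f1 n = muf f2 n.
Proof.
  induction f1; intros f2 n H1 H2.
  - assert (n = 0)%nat by lia. subst. destruct f2; simpl; auto.
  - destruct f2. assert (n = 0)%nat by lia. subst. simpl. auto.
    simpl. destruct (Nat.eqb n 1) eqn:E1; auto. destruct (Nat.eqb n 0) eqn:E0; auto.
    destruct (Nat.eqb (n mod (lpf n * lpf n)) 0); auto. f_equal.
    apply Nat.eqb_neq in E1, E0. destruct (lpf_spec n ltac:(lia)) as [Hp _].
    assert (n / lpf n < n)%nat by (apply Nat.div_lt; lia). apply IHf1; lia.
Qed.

Lemma mu_1 : mu 1 = 1.
Proof. reflexivity. Qed.

Lemma muf_S f n : muf (S f) n = if Nat.eqb n 1 then 1 else if Nat.eqb n 0 then 0 else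
            if Nat.eqb (n mod (lpf n * lpf n)) 0 then 0 else - muf f (n / lpf n).
Proof. reflexivity. Qed.

Lemma mu_eq n : (2 <= n)%nat -> mu n = if Nat.eqb (n mod (lpf n * lpf n)) 0 then 0 else - mu (n / lpf n).
Proof.
  intros H. destruct n. lia. unfold mu at 1. rewrite muf_S.
  replace (Nat.eqb (S n) 1) with false by (symmetry; apply Nat.eqb_neq; lia).
  replace (Nat.eqb (S n) 0) with false by (symmetry; apply Nat.eqb_neq; lia).
  destruct ((S n) mod (lpf (S n) * lpf (S n)) =? 0); auto. f_equal. unfold mu. apply muf_indep.
  destruct (lpf_spec (S n) H) as [Hp _]. assert (S n / lpf (S n) < S n)%nat by (apply Nat.div_lt; lia). lia. lia.
Qed.

Lemma muf_bound : forall f n, Rabs (muf f n) <= 1.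
Proof.
  induction f; intros n; simpl. rewrite Rabs_R0; lra.
  destruct (Nat.eqb n 1). rewrite Rabs_R1; lra. destruct (Nat.eqb n 0). rewrite Rabs_R0; lra.
  destruct (Nat.eqb _ 0). rewrite Rabs_R0; lra. rewrite Rabs_Ropp. auto.
Qed.
Lemma mu_bound n : Rabs (mu n) <= 1.
Proof. apply muf_bound. Qed.


Lemma gcd_lpf_one n p d : (2 <= n)%nat -> p = lpf n -> Nat.divide d n -> ~ Nat.divide p d -> Nat.gcd p d = 1%nat.
Proof.
  intros Hn Hp Hd Hpd. destruct (lpf_spec n Hn) as [H1 [H2 H3]]. rewrite <- Hp in *.
  set (g := Nat.gcd p d).
  assert (Hgp : Nat.divide g p) by apply Nat.gcd_divide_l.
  assert (Hgd : Nat.divide g d) by apply Nat.gcd_divide_r.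
  assert (g <> 0)%nat. { intros E. apply Nat.gcd_eq_0_l in E. lia. }
  destruct (le_lt_dec 2 g).
  - exfalso. assert (p <= g)%nat by (apply H3; auto; eapply Nat.divide_trans; eauto).
    assert (g <= p)%nat by (apply Nat.divide_pos_le; auto; lia).
    assert (Hgpe : g = p) by lia. apply Hpd. rewrite <- Hgpe. auto.
  - lia.
Qed.

Lemma lpf_mul_div n p d : (2 <= n)%nat -> p = lpf n -> Nat.divide d n -> ~ Nat.divide p d -> Nat.divide (p * d) n.
Proof.
  intros Hn Hp Hd Hpd. pose proof (gcd_lpf_one n p d Hn Hp Hd Hpd) as Hg.
  destruct (lpf_spec n Hn) as [H1 [H2 H3]]. rewrite <- Hp in *.
  destruct Hd as [k Hk]. subst n.
  assert (Nat.divide p k). { apply Nat.gauss with d. rewrite Nat.mul_comm. auto. auto. }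
  destruct H as [k' Hk']. subst k. exists k'. ring.
Qed.

Lemma lpf_sub n p x : (2 <= n)%nat -> p = lpf n -> Nat.divide x n -> (1 <= x)%nat -> Nat.divide p x -> lpf x = p.
Proof.
  intros Hn Hp Hx Hx1 Hpx. destruct (lpf_spec n Hn) as [H1 [H2 H3]]. rewrite <- Hp in *.
  apply lpf_char; auto. split; auto. split; auto. intros e He Hex. apply H3; auto. eapply Nat.divide_trans; eauto.
Qed.

Lemma mu_pd n p d : (2 <= n)%nat -> p = lpf n -> Nat.divide d n -> ~ Nat.divide p d -> (1 <= d)%nat ->
  mu (p * d) = - mu d.
Proof.
  intros Hn Hp Hd Hpd Hd1. pose proof (lpf_mul_div n p d Hn Hp Hd Hpd) as Hm.
  destruct (lpf_spec n Hn) as [H1 [H2 H3]]. rewrite <- Hp in *.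
  assert (Hl : lpf (p * d) = p). { apply (lpf_sub n); auto. nia. exists d. ring. }
  rewrite mu_eq by nia. rewrite Hl.
  destruct (Nat.eqb ((p * d) mod (p * p)) 0) eqn:E.
  - apply Nat.eqb_eq in E. apply Nat.mod_divide in E; [|nia]. exfalso. apply Hpd.
    apply Nat.mul_divide_cancel_l in E; auto. lia.
  - f_equal. f_equal. rewrite Nat.mul_comm. apply Nat.div_mul. lia.
Qed.

Lemma mu_p2 n p d : (2 <= n)%nat -> p = lpf n -> Nat.divide d n -> Nat.divide (p * p) d -> (1 <= d)%nat -> mu d = 0.
Proof.
  intros Hn Hp Hd Hpp Hd1. destruct (lpf_spec n Hn) as [H1 [H2 H3]].
  assert (Hl : lpf d = p). { apply (lpf_sub n); auto. eapply Nat.divide_trans; [|apply Hpp]. exists p. rewrite Hp. ring. }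
  assert (2 <= d)%nat. { apply Nat.divide_pos_le in Hpp; [|lia]. rewrite Hp in Hpp. nia. }
  rewrite mu_eq by auto. rewrite Hl. replace (Nat.eqb (d mod (p * p)) 0) with true; auto.
  symmetry. apply Nat.eqb_eq. apply Nat.mod_divide; auto. nia.
Qed.

Lemma mobius_sum n : (1 <= n)%nat ->
  CS (seq 1 n) (fun d => if emi (Nat.divide d n) then RtoC (mu d) else Cx0) = if Nat.eq_dec n 1 then Cx1 else Cx0.
Proof.
  intros Hn. destruct (Nat.eq_dec n 1) as [->|Hn1].
  { simpl. rewrite CS_cons, CS_nil. destruct (emi (Nat.divide 1 1)). rewrite mu_1. cring. exfalso; apply n; apply Nat.divide_1_l. }
  assert (Hn2 : (2 <= n)%nat) by lia.
  set (p := lpf n). destruct (lpf_spec n Hn2) as [Hp2 [Hpn Hpmin]]. fold p in Hp2, Hpn, Hpmin.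
  set (cond := fun d' => Nat.divide d' n /\ ~ Nat.divide p d').
  set (A := CS (seq 1 n) (fun d => if emi (cond d) then RtoC (mu d) else Cx0)).
  set (Bp := CS (seq 1 n) (fun d => if emi (Nat.divide p d /\ cond (d / p)%nat) then RtoC (mu d) else Cx0)).
  assert (Hsplit : CS (seq 1 n) (fun d => if emi (Nat.divide d n) then RtoC (mu d) else Cx0) = Cadd A Bp).
  { unfold A, Bp. rewrite <- CS_add. apply CS_ext. intros d Hd. apply in_seq in Hd.
    destruct (emi (cond d)) as [Hc|Hc]; destruct (emi (Nat.divide p d /\ cond (d / p)%nat)) as [Hb|Hb];
    destruct (emi (Nat.divide d n)) as [Hdn|Hdn]; unfold cond in *.
    - exfalso. destruct Hb as [Hpd _]. tauto.
    - exfalso. destruct Hb as [Hpd _]. tauto.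
    - cring.
    - tauto.
    - cring.
    - exfalso. destruct Hb as [[k Hk] Hk2]. apply Hdn. rewrite Hk. rewrite Hk, Nat.div_mul in Hk2 by lia.
      destruct Hk2 as [Hk2 Hk3]. pose proof (lpf_mul_div n p k Hn2 eq_refl Hk2 Hk3). rewrite Nat.mul_comm. auto.
    -
      destruct (emi (Nat.divide p d)) as [Hpd|Hpd].
      + assert (Nat.divide (p * p) d).
        { destruct Hpd as [k Hk]. assert (Hkn : Nat.divide k n). { eapply Nat.divide_trans; [|apply Hdn]. exists p. lia. }
          destruct (emi (Nat.divide p k)) as [[q Hq]|Hpk].
          - exists q. subst. ring.
          - exfalso. apply Hb. split. exists k; auto. rewrite Hk, Nat.div_mul by lia. auto. }
        rewrite (mu_p2 n p d) by (auto; lia). cring.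
      + exfalso. apply Hc. split; auto.
    - cring. }
  assert (HB : Bp = CS (seq 1 n) (fun d' => if emi (cond d') then RtoC (mu (p * d')) else Cx0)).
  { unfold Bp.
    rewrite (CS_ext (seq 1 n) _ (fun d => CS (seq 1 n) (fun e => if Nat.eq_dec (p * e) d then (fun _ e => if emi (cond e) then RtoC (mu (p * e)) else Cx0) p e else Cx0))).
    2:{ intros d Hd. apply in_seq in Hd.
        pose proof (inner_single (fun _ e => if emi (cond e) then RtoC (mu (p * e)) else Cx0) n d p ltac:(lia) ltac:(lia)) as HI.
        cbv beta in HI |- *. rewrite HI.
        destruct (emi (Nat.divide p d)) as [[k Hk]|Hpd].
        - subst d. rewrite Nat.div_mul by lia. replace (p * k)%nat with (k * p)%nat by ring.
          destruct (emi (Nat.divide p (k * p) /\ cond k)) as [[_ Hc]|Hc]; destruct (emi (cond k)); try tauto. auto.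
          exfalso. apply Hc. split; auto. exists k; auto.
        - destruct (emi (Nat.divide p d /\ cond (d / p)%nat)) as [[H _]|]; tauto. }
    rewrite CS_swap. apply CS_ext. intros d' Hd'. apply in_seq in Hd'.
    rewrite (CS_ext _ _ (fun d => if Nat.eq_dec d (p * d') then (if emi (cond d') then RtoC (mu (p * d')) else Cx0) else Cx0)).
    2:{ intros d _. destruct (Nat.eq_dec (p * d') d); destruct (Nat.eq_dec d (p * d')); auto; lia. }
    rewrite CS_single. destruct (emi (cond d')) as [Hc|Hc].
    - destruct Hc as [Hdn Hpd]. pose proof (lpf_mul_div n p d' Hn2 eq_refl Hdn Hpd) as Hm.
      apply Nat.divide_pos_le in Hm; [|lia].
      destruct (Nat.leb 1 (p * d')) eqn:E1; destruct (Nat.ltb (p * d') (1 + n)) eqn:E2; simpl; auto; boolsimp; nia.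
    - destruct ((1 <=? p * d') && (p * d' <? 1 + n))%bool; auto. }
  assert (HA : Bp = Copp A).
  { rewrite HB. unfold A. replace (Copp (CS (seq 1 n) (fun d => if emi (cond d) then RtoC (mu d) else Cx0)))
      with (Cmul (RtoC (-1)) (CS (seq 1 n) (fun d => if emi (cond d) then RtoC (mu d) else Cx0))) by cring.
    rewrite <- CS_scal. apply CS_ext. intros d Hd. apply in_seq in Hd. destruct (emi (cond d)) as [[Hdn Hpd]|].
    - rewrite (mu_pd n p d) by (auto; lia). unfold RtoC, Cmul; simpl. f_equal; ring.
    - cring. }
  rewrite Hsplit, HA. cring.
Qed.


Module NT.
Import ssreflect ssrfun ssrbool eqtype ssrnat div.
Local Open Scope nat_scope.

Lemma div_bridge x y : Nat.divide x y <-> is_true (dvdn x y).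
Proof. split. move=> [z ->]. apply/dvdnP. by exists z. move/dvdnP => [z ->]. by exists z. Qed.

Lemma pow_bridge a k : Nat.pow a k = expn a k.
Proof. elim: k => [|k IH] //=. by rewrite expnS IH. Qed.

Lemma pow_div_pow e q k : (1 <= k)%coq_nat -> Nat.divide (Nat.pow e k) (Nat.pow q k) -> Nat.divide e q.
Proof.
  move=> Hk. rewrite !pow_bridge !div_bridge dvdn_pexp2r //. by apply/leP.
Qed.

Lemma combine a' b' g k m : 0 < g -> coprime a' b' -> (a' * g) ^ k %| m -> (b' * g) ^ k %| m ->
  (a' * b' * g) ^ k %| m.
Proof.
  move=> g0 co /dvdnP [u ->] Hb. rewrite !expnMn in Hb *. rewrite mulnA in Hb.
  have gk : 0 < g ^ k by rewrite expn_gt0 g0.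
  rewrite dvdn_pmul2r // in Hb.
  have co' : coprime (b' ^ k) (a' ^ k) by apply: coprimeXl; apply: coprimeXr; rewrite coprime_sym.
  rewrite Gauss_dvdl // in Hb. move/dvdnP: Hb => [w ->].
  apply/dvdnP. exists w. rewrite -!mulnA. congr (_ * _). rewrite mulnC -!mulnA. congr (_ * _). by rewrite mulnC.
Qed.

Lemma Sclosed_mc a b h q k : 0 < a -> 0 < b -> a ^ k %| h -> b ^ k %| h -> a %| q -> b %| q ->
  exists L, [/\ a %| L, b %| L, L %| q & L ^ k %| h].
Proof.
  move=> a0 b0 ha hb aq bq. set g := gcdn a b.
  have g0 : 0 < g by rewrite gcdn_gt0 a0.
  have ea : a = (a %/ g) * g by rewrite divnK // dvdn_gcdl.
  have eb : b = (b %/ g) * g by rewrite divnK // dvdn_gcdr.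
  have co : coprime (a %/ g) (b %/ g).
  { rewrite /coprime. apply/eqP. have := muln_gcdl (a %/ g) (b %/ g) g. rewrite -ea -eb -/g.
    move=> H. apply/eqP. rewrite -(eqn_pmul2r g0) mul1n. by apply/eqP. }
  exists ((a %/ g) * (b %/ g) * g). split.
  - rewrite {1}ea. apply: dvdn_mul => //. by apply: dvdn_mulr.
  - rewrite {1}eb. apply: dvdn_mul => //. by apply: dvdn_mull.
  - rewrite -(expn1 ((a %/ g) * (b %/ g) * g)). apply: combine => //. by rewrite expn1 -ea. by rewrite expn1 -eb.
  - apply: combine => //. by rewrite -ea. by rewrite -eb.
Qed.

Lemma Sclosed a b h q k : (1 <= a)%coq_nat -> (1 <= b)%coq_nat -> Nat.divide (Nat.pow a k) h -> Nat.divide (Nat.pow b k) h ->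
  Nat.divide a q -> Nat.divide b q ->
  exists L, Nat.divide a L /\ Nat.divide b L /\ Nat.divide L q /\ Nat.divide (Nat.pow L k) h.
Proof.
  move=> a1 b1. rewrite !pow_bridge !div_bridge => ha hb aq bq.
  have [L [H1 H2 H3 H4]] := Sclosed_mc a b h q k (introT leP a1) (introT leP b1) ha hb aq bq.
  exists L. by rewrite !pow_bridge !div_bridge.
Qed.
End NT.
Open Scope R_scope.


Lemma max_exists (P : nat -> Prop) : forall b, (forall x, P x -> (x <= b)%nat) -> P 1%nat ->
  exists D, P D /\ forall x, P x -> (x <= D)%nat.
Proof.
  induction b; intros Hb H1.
  - specialize (Hb _ H1). lia.
  - destruct (classic (P (S b))) as [HP|HP].
    + exists (S b). split; auto.
    + apply IHb; auto. intros x Hx. specialize (Hb x Hx). destruct (Nat.eq_dec x (S b)). subst; tauto. lia.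
Qed.

Lemma pow_divide_mono d D k : Nat.divide d D -> Nat.divide (Nat.pow d k) (Nat.pow D k).
Proof. intros [c ->]. exists (Nat.pow c k). apply Nat.pow_mul_l. Qed.

Lemma betaD k q h : (1 <= k)%nat -> (1 <= q)%nat ->
  exists D, (1 <= D)%nat /\ Nat.divide D q /\
    (forall d, (1 <= d)%nat -> (Nat.divide d q /\ Nat.divide (Nat.pow d k) h) <-> Nat.divide d D).
Proof.
  intros Hk Hq.
  set (P := fun x => (1 <= x)%nat /\ Nat.divide x q /\ Nat.divide (Nat.pow x k) h).
  destruct (max_exists P q) as [D [[HD1 [HDq HDh]] HDmax]].
  { intros x [Hx [Hxq _]]. apply Nat.divide_pos_le; auto; lia. }
  { split. lia. split. apply Nat.divide_1_l. rewrite Nat.pow_1_l. apply Nat.divide_1_l. }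
  exists D. split; auto. split; auto. intros d Hd. split.
  - intros [Hdq Hdh]. destruct (NT.Sclosed d D h q k Hd HD1 Hdh HDh Hdq HDq) as [L [HdL [HDL [HLq HLh]]]].
    assert (HL1 : (1 <= L)%nat). { destruct L. destruct HLq as [c Hc]. lia. lia. }
    assert (L <= D)%nat by (apply HDmax; split; auto).
    assert (D <= L)%nat by (apply Nat.divide_pos_le; auto; lia).
    assert (L = D) by lia. subst L. auto.
  - intros HdD. split. eapply Nat.divide_trans; eauto. eapply Nat.divide_trans; [|apply HDh]. apply pow_divide_mono; auto.
Qed.

Lemma betacop_iff k q h D : (1 <= k)%nat -> (1 <= q)%nat -> (1 <= D)%nat -> Nat.divide D q ->
  (forall d, (1 <= d)%nat -> (Nat.divide d q /\ Nat.divide (Nat.pow d k) h) <-> Nat.divide d D) ->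
  (beta_coprime k h (Nat.pow q k) <-> D = 1%nat).
Proof.
  intros Hk Hq HD HDq Hiff. split.
  - intros Hb. destruct (Nat.eq_dec D 1); auto. exfalso. apply (Hb D). lia.
    destruct (Hiff D HD) as [_ H]. destruct (H (Nat.divide_refl D)) as [_ H2]. split; auto.
    apply pow_divide_mono; auto.
  - intros -> e He [Heh Heq]. apply NT.pow_div_pow in Heq; auto.
    destruct (Hiff e ltac:(lia)) as [H _]. specialize (H (conj Heq Heh)).
    apply Nat.divide_pos_le in H; lia.
Qed.

Lemma indicator_mu k q h : (1 <= k)%nat -> (1 <= q)%nat ->
  (if emi (beta_coprime k h (Nat.pow q k)) then Cx1 else Cx0) =
  CS (seq 1 q) (fun d => if emi (Nat.divide d q /\ Nat.divide (Nat.pow d k) h) then RtoC (mu d) else Cx0).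
Proof.
  intros Hk Hq. destruct (betaD k q h Hk Hq) as [D [HD [HDq Hiff]]].
  rewrite (CS_ext _ _ (fun d => if emi (Nat.divide d D) then RtoC (mu d) else Cx0)).
  2:{ intros d Hd. apply in_seq in Hd. specialize (Hiff d ltac:(lia)).
      destruct (emi (Nat.divide d q /\ Nat.divide (Nat.pow d k) h)); destruct (emi (Nat.divide d D)); tauto. }
  assert (D <= q)%nat by (apply Nat.divide_pos_le; auto; lia).
  replace (seq 1 q) with (seq 1 (D + (q - D))) by (f_equal; lia). rewrite seq_split, CS_app.
  rewrite (CS_ext (seq (1 + D) (q - D)) _ (fun _ => Cx0)).
  2:{ intros d Hd. apply in_seq in Hd. destruct (emi (Nat.divide d D)) as [Hdd|]; auto.
      apply Nat.divide_pos_le in Hdd; lia. }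
  rewrite CS_zero, Cadd_0_r, mobius_sum by auto.
  pose proof (betacop_iff k q h D Hk Hq HD HDq Hiff).
  destruct (emi (beta_coprime k h (Nat.pow q k))); destruct (Nat.eq_dec D 1); tauto.
Qed.

Lemma CS_shift a n f : CS (seq (S a) n) f = CS (seq a n) (fun j => f (S j)).
Proof. revert a; induction n; intros a; auto. simpl. rewrite !CS_cons, IHn. auto. Qed.

Lemma multiples_sum a b (F : nat -> Cx) : (1 <= a)%nat ->
  CS (seq 0 (a * b)) (fun h => if emi (Nat.divide a h) then F h else Cx0) = CS (seq 0 b) (fun j => F (a * j)%nat).
Proof.
  intros Ha. induction b.
  - rewrite Nat.mul_0_r. reflexivity.
  - replace (a * S b)%nat with (a * b + a)%nat by ring. rewrite seq_split, CS_app, IHb.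
    rewrite seq_S_end, CS_app. f_equal. rewrite !Nat.add_0_l.
    destruct a. lia.
    change (seq (S a * b) (S a)) with (S a * b :: seq (S (S a * b)) a)%nat. rewrite !CS_cons, CS_nil.
    destruct (emi (Nat.divide (S a) (S a * b))) as [_|Hn]. 2:{ exfalso. apply Hn. exists b. ring. }
    rewrite (CS_ext (seq (S (S a * b)) a) _ (fun _ => Cx0)). rewrite CS_zero. reflexivity.
    intros x Hx. apply in_seq in Hx. destruct (emi (Nat.divide (S a) x)) as [Hd|]; auto. exfalso.
    replace x with (S a * b + (x - S a * b))%nat in Hd by lia.
    apply Nat.divide_add_cancel_r in Hd. 2:{ exists b. ring. }
    apply Nat.divide_pos_le in Hd; lia.
Qed.

Definition Eroot (m N j : nat) : Cx := Cexp (0, 2 * PI * INR m * INR j / INR N).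

Lemma CS_const_one N : CS (seq 0 N) (fun _ => Cx1) = RtoC (INR N).
Proof.
  induction N. reflexivity. rewrite seq_S_end, CS_app, IHN, S_INR. unfold CS; simpl.
  unfold RtoC, Cadd, Cx1, Cx0; simpl. f_equal; ring.
Qed.

Lemma geometric_sum N m : (1 <= N)%nat ->
  CS (seq 0 N) (Eroot m N) = if emi (Nat.divide N m) then RtoC (INR N) else Cx0.
Proof.
  intros HR. assert (HRp : 0 < INR N) by (apply lt_0_INR; lia).
  destruct (emi (Nat.divide N m)) as [[c Hc]|Hnd].
  - rewrite (CS_ext _ _ (fun _ => Cx1)). apply CS_const_one.
    intros j _. unfold Eroot, Cexp; simpl. rewrite exp_0.
    replace (2 * PI * INR m * INR j / INR N) with (0 + 2 * INR (c * j) * PI).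
    rewrite cos_period, sin_period, cos_0, sin_0. unfold Cx1. f_equal; ring.
    subst m. rewrite !mult_INR. field. lra.
  - set (w := Cexp (0, 2 * PI * INR m / INR N)).
    assert (Hstep : forall j, Eroot m N (S j) = Cmul (Eroot m N j) w).
    { intros j. unfold Eroot, w. rewrite <- Cexp_add. f_equal. unfold Cadd; cbn [fst snd]. rewrite S_INR. f_equal; [ring|field; lra]. }
    assert (HR0 : Eroot m N N = Eroot m N 0).
    { unfold Eroot, Cexp. cbn [fst snd]. replace (2 * PI * INR m * INR N / INR N) with (0 + 2 * INR m * PI) by (field; lra).
      rewrite cos_period, sin_period. change (INR 0) with 0. replace (2 * PI * INR m * 0 / INR N) with 0 by (field; lra). reflexivity. }
    set (Ssum := CS (seq 0 N) (Eroot m N)).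
    assert (HS : Cmul Ssum w = Ssum).
    { unfold Ssum. rewrite Cmul_comm, <- CS_scal.
      rewrite (CS_ext _ _ (fun j => Eroot m N (S j))) by (intros; rewrite Hstep; apply Cmul_comm).
      rewrite <- CS_shift.
      assert (CS (seq 0 (Datatypes.S N)) (Eroot m N) = Cadd (Eroot m N 0) (CS (seq 1 N) (Eroot m N))) by reflexivity.
      rewrite seq_S_end, CS_app in H. simpl in H. rewrite CS_cons, CS_nil, HR0 in H.
      replace (Cadd (Eroot m N 0) (CS (seq 1 N) (Eroot m N))) with (Cadd (CS (seq 1 N) (Eroot m N)) (Eroot m N 0)) in H by apply Cadd_comm.
      replace (Cadd (CS (seq 0 N) (Eroot m N)) (Cadd (Eroot m N 0) Cx0)) with (Cadd (CS (seq 0 N) (Eroot m N)) (Eroot m N 0)) in H by cring.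
      assert (forall a b c, Cadd a c = Cadd b c -> a = b) as Hc by (intros a b c Habc; replace a with (Csub (Cadd a c) c) by cring; rewrite Habc; cring).
      symmetry. eapply Hc. exact H. }
    assert (Hw : Csub w Cx1 <> Cx0).
    { intros Hw1. apply Hnd.
      assert (Hw2 : w = Cx1) by (replace w with (Cadd (Csub w Cx1) Cx1) by cring; rewrite Hw1; cring).
      unfold w, Cexp, Cx1 in Hw2. simpl in Hw2. rewrite exp_0 in Hw2.
      pose proof (f_equal fst Hw2) as Hc1. pose proof (f_equal snd Hw2) as Hs1. simpl in Hc1, Hs1.
      rewrite Rmult_1_l in Hc1, Hs1.
      pose proof (Nat.div_mod m N ltac:(lia)) as Hdm. set (c := (m / N)%nat) in *. set (r := (m mod N)%nat) in *.
      pose proof (Nat.mod_bound_pos m N ltac:(lia) ltac:(lia)). fold r in H.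
      destruct (Nat.eq_dec r 0) as [Hr0|Hr0]. { exists c. lia. }
      exfalso.
      assert (Hang : 2 * PI * INR m / INR N = 2 * PI * INR r / INR N + 2 * INR c * PI).
      { rewrite Hdm. rewrite plus_INR, mult_INR. field. lra. }
      rewrite Hang, cos_period in Hc1. rewrite Hang, sin_period in Hs1.
      assert (Hr : 0 < INR r < INR N) by (split; [apply lt_0_INR; lia | apply lt_INR; lia]).
      assert (0 < 2 * PI * INR r / INR N < 2 * PI).
      { pose proof PI_RGT_0. split. apply Rdiv_lt_0_compat; nra.
        apply (Rmult_lt_reg_r (INR N)); auto. field_simplify; nra. }
      destruct (sin_eq_O_2PI_0 (2 * PI * INR r / INR N) ltac:(lra) ltac:(lra) Hs1) as [E|[E|E]]; try lra.
      rewrite E, cos_PI in Hc1. lra. }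
    assert (Cmul Ssum (Csub w Cx1) = Cx0) by (replace (Cmul Ssum (Csub w Cx1)) with (Csub (Cmul Ssum w) Ssum) by cring; rewrite HS; cring).
    rewrite Cmul_comm in H. apply (Cmul_integral _ _ H Hw).
Qed.


Definition gfun (k m e : nat) : Cx :=
  if emi (Nat.divide (Nat.pow e k) m) then RtoC (INR (Nat.pow e k)) else Cx0.

Lemma pow_pos_nat a k : (1 <= a)%nat -> (1 <= Nat.pow a k)%nat.
Proof. intros. induction k; simpl; nia. Qed.

Definition EQ (m Q h : nat) : Cx := Cexp (0, 2 * PI * INR m * INR h / INR Q).

Lemma ramanujan_conv k q m : (1 <= k)%nat -> (1 <= q)%nat ->
  ramanujan_beta k q m = conv (fun d => RtoC (mu d)) (gfun k m) q.
Proof.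
  intros Hk Hq. unfold ramanujan_beta. cbv zeta.
  set (Q := Nat.pow q k).
  change (Csum_list (map ?f ?l)) with (CS l f).
  change (CS (seq 0 Q) (fun h => if excluded_middle_informative (beta_coprime k h Q) then Cexp (0, 2 * PI * INR m * INR h / INR Q) else Cx0))
    with (CS (seq 0 Q) (fun h => if emi (beta_coprime k h Q) then EQ m Q h else Cx0)).
  rewrite (CS_ext _ _ (fun h => CS (seq 1 q) (fun d => if emi (Nat.divide d q /\ Nat.divide (Nat.pow d k) h) then Cmul (RtoC (mu d)) (EQ m Q h) else Cx0))).
  2:{ intros h _. transitivity (Cmul (EQ m Q h) (if emi (beta_coprime k h Q) then Cx1 else Cx0)).
      destruct (emi (beta_coprime k h Q)); cring.
      unfold Q. rewrite indicator_mu by auto. rewrite <- CS_scal. apply CS_ext. intros d _.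
      destruct (emi (Nat.divide d q /\ Nat.divide (Nat.pow d k) h)); cring. }
  rewrite CS_swap. unfold conv. apply CS_ext. intros d Hd. apply in_seq in Hd.
  destruct (excluded_middle_informative (Nat.divide d q)) as [Hdq|Hdq].
  2:{ rewrite (CS_ext _ _ (fun _ => Cx0)). apply CS_zero. intros h _.
      destruct (emi (Nat.divide d q /\ Nat.divide (Nat.pow d k) h)) as [[]|]; tauto. }
  rewrite (CS_ext _ _ (fun h => Cmul (RtoC (mu d)) (if emi (Nat.divide (Nat.pow d k) h) then EQ m Q h else Cx0))).
  2:{ intros h _. destruct (emi (Nat.divide d q /\ Nat.divide (Nat.pow d k) h)) as [[]|Hn];
      destruct (emi (Nat.divide (Nat.pow d k) h)); try tauto; cring. }
  rewrite CS_scal. f_equal.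
  destruct Hdq as [c Hc].
  assert (Hc1 : (1 <= c)%nat) by (destruct c; lia).
  assert (Hqd : (q / d)%nat = c) by (rewrite Hc; apply Nat.div_mul; lia).
  rewrite Hqd.
  assert (HQ : Q = (Nat.pow d k * Nat.pow c k)%nat) by (unfold Q; rewrite Hc, Nat.pow_mul_l; ring).
  rewrite HQ at 1. rewrite multiples_sum by (apply pow_pos_nat; lia).
  rewrite (CS_ext _ _ (Eroot m (Nat.pow c k))).
  - rewrite geometric_sum by (apply pow_pos_nat; auto). unfold gfun. reflexivity.
  - intros j _. unfold EQ, Eroot. f_equal. f_equal. rewrite HQ, !mult_INR.
    assert (0 < INR (Nat.pow d k)) by (apply lt_0_INR; pose proof (pow_pos_nat d k ltac:(lia)); lia).
    assert (0 < INR (Nat.pow c k)) by (apply lt_0_INR; pose proof (pow_pos_nat c k ltac:(lia)); lia).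
    field. lra.
Qed.


Lemma dterm_ext a b s n : a n = b n -> dterm a s n = dterm b s n.
Proof. intros H. unfold dterm. rewrite H. auto. Qed.

Lemma BND_dterm_ext a b s : (forall n, (1 <= n)%nat -> a n = b n) ->
  BND (fun n => Cnorm (dterm a s n)) -> BND (fun n => Cnorm (dterm b s n)).
Proof. intros H. apply BND_ext. intros n Hn. rewrite (dterm_ext a b s n (H n Hn)). auto. Qed.
Lemma CCV_dterm_ext a b s l : (forall n, (1 <= n)%nat -> a n = b n) ->
  CCV (dterm a s) l -> CCV (dterm b s) l.
Proof. intros H. apply CCV_ext. intros n Hn. apply dterm_ext; auto. Qed.

Lemma Cpow_1 z : Cpow_pos 1 z = Cx1.
Proof. unfold Cpow_pos. rewrite ln_1. replace (Cmul (RtoC 0) z) with Cx0 by cring. apply Cexp_0. Qed.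

Theorem main_proof (beta k m : nat) (s : Cx) :
  (1 <= beta)%nat -> (1 <= k)%nat -> (1 <= m)%nat -> Re s > 1 ->
  Cseries_abs_conv (fun i => dirichlet_term beta k m s (S i)) /\
  Cseries_conv (fun i => dirichlet_term beta k m s (S i))
    (Cmul (RtoC ((-1) ^ k))
       (Cmul (sigma_beta beta (Csub Cx1 (Cdiv s (RtoC (INR beta)))) m)
             (Cdiv (Cderiv_n k zeta s) (zeta s)))).
Proof.
  intros Hb Hk Hm Hs. unfold Re in Hs. assert (Hs1 : 1 < fst s) by lra. clear Hs.
  set (muC := fun d => RtoC (mu d)).
  set (one := fun _ : nat => Cx1).
  set (g := gfun beta m).
  set (Lk := fun e => RtoC (ln (INR e) ^ k)).
  set (c := fun d => ramanujan_beta beta d m).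
  assert (BMu : BND (fun n => Cnorm (dterm muC s n))).
  { apply BND_dterm_le with (c := 1) (j := 0%nat); auto; try lra. intros n Hn. unfold muC.
    rewrite Cnorm_RtoC. simpl. pose proof (mu_bound n). lra. }
  destruct (BND_CCV _ BMu) as [Lmu CMu].
  assert (Hg0 : forall n, (m < n)%nat -> g n = Cx0).
  { intros n Hn. unfold g, gfun. destruct (emi (Nat.divide (Nat.pow n beta) m)) as [Hd|]; auto.
    exfalso. apply Nat.divide_pos_le in Hd; [|lia].
    assert (n <= Nat.pow n beta)%nat. { destruct beta. lia. simpl. pose proof (pow_pos_nat n beta ltac:(lia)). nia. }
    lia. }
  assert (BG : BND (fun n => Cnorm (dterm g s n))).
  { apply BND_finite with (K := m). intros; apply Cnorm_nonneg.
    intros n Hn. unfold dterm, Cdiv. rewrite Hg0 by auto. rewrite Cmul_0_l. apply Cnorm_0. }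
  set (sig := sigma_beta beta (Csub Cx1 (Cdiv s (RtoC (INR beta)))) m).
  assert (CG : CCV (dterm g s) sig).
  { replace sig with (CP (dterm g s) m).
    - apply CCV_finite. intros n Hn. unfold dterm, Cdiv. rewrite Hg0 by auto. apply Cmul_0_l.
    - unfold sig, sigma_beta, CP. change (Csum_list (map ?f ?l)) with (CS l f). apply CS_ext.
      intros d Hd. apply in_seq in Hd. unfold dterm, g, gfun, emi.
      destruct (excluded_middle_informative (Nat.divide (Nat.pow d beta) m)).
      + assert (HdR : 0 < INR d) by (apply lt_0_INR; lia).
        assert (HbR : INR beta <> 0) by (apply not_0_INR; lia).
        replace (Cmul (RtoC (INR beta)) (Csub Cx1 (Cdiv s (RtoC (INR beta))))) with (Cadd (RtoC (INR beta)) (Copp s)).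
        2:{ destruct s as [a b]. unfold Cdiv, Cmul, Cinv, Csub, Cadd, Copp, RtoC, Cx1; simpl. f_equal; field; auto. }
        rewrite Cpow_add, Cpow_real by auto. rewrite <- Cinv_Cpow. unfold Cdiv. f_equal. f_equal.
        rewrite Rpower_pow by auto. rewrite pow_INR. auto.
      + unfold Cdiv. rewrite Cmul_0_l. auto. }
  assert (BL : BND (fun n => Cnorm (dterm Lk s n))).
  { apply BND_dterm_le with (c := 1) (j := k); auto; try lra. intros n Hn. unfold Lk.
    rewrite Cnorm_RtoC. rewrite Rabs_pos_eq. lra. apply pow_le. apply ln_INR_nonneg; auto. }
  assert (CL : CCV (dterm Lk s) (Cmul (RtoC ((-1) ^ k)) (Cderiv_n k zeta s))).
  { rewrite Cderiv_n_zeta by auto. apply CCV_ext with (x := fun n => Cmul (RtoC ((-1) ^ k)) (dterm (Lj k) s n)).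
    - intros n Hn. unfold dterm, Lj, Lk, Cdiv. rewrite Cmul_assoc, <- RtoC_mul. f_equal. f_equal.
      rewrite <- Rpow_mult_distr. f_equal. ring.
    - apply CCV_scal. apply Zf_CCV. auto. }
  assert (BO : BND (fun n => Cnorm (dterm one s n))).
  { apply BND_dterm_le with (c := 1) (j := 0%nat); auto; try lra. intros n Hn. unfold one.
    change Cx1 with (RtoC 1). rewrite Cnorm_RtoC. simpl. rewrite Rabs_R1. lra. }
  pose proof (zeta_CCV s Hs1) as CO. fold one in CO.
  destruct (dirichlet_product muC one s Lmu (zeta s) BMu BO CMu CO) as [_ CMO].
  assert (CD : CCV (dterm (conv muC one) s) Cx1).
  { assert (Hd : forall n, (1 <= n)%nat -> conv muC one n = if Nat.eq_dec n 1 then Cx1 else Cx0).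
    { intros n Hn. rewrite <- mobius_sum by auto. unfold conv. apply CS_ext. intros d _.
      unfold emi. destruct (excluded_middle_informative (Nat.divide d n)); auto. unfold one, muC. apply Cmul_1_r. }
    replace Cx1 with (CP (dterm (conv muC one) s) 1).
    - apply CCV_finite. intros n Hn. unfold dterm. rewrite Hd by lia. destruct (Nat.eq_dec n 1). lia. unfold Cdiv. apply Cmul_0_l.
    - unfold CP. simpl. rewrite CS_cons, CS_nil. unfold dterm. rewrite Hd by lia. simpl.
      change (INR 1) with 1. rewrite Cpow_1. unfold Cdiv. replace (Cinv Cx1) with Cx1.
      cring. symmetry. apply Cinv_unique. cring. }
  assert (Hinv : Cinv (zeta s) = Lmu).
  { apply Cinv_unique. rewrite Cmul_comm. eapply CCV_unique; eauto. }
  destruct (dirichlet_product muC g s Lmu sig BMu BG CMu CG) as [BMG CMG].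
  assert (Hc : forall n, (1 <= n)%nat -> conv muC g n = c n).
  { intros n Hn. unfold c. rewrite ramanujan_conv by auto. reflexivity. }
  pose proof (BND_dterm_ext _ _ s Hc BMG) as BC.
  pose proof (CCV_dterm_ext _ _ s _ Hc CMG) as CC.
  destruct (dirichlet_product c Lk s _ _ BC BL CC CL) as [BLam CLam].
  change (dterm (conv c Lk) s) with (dirichlet_term beta k m s) in BLam, CLam.
  split.
  - apply BND_abs. auto.
  - apply CCV_conv. replace (Cmul (RtoC ((-1) ^ k)) (Cmul sig (Cdiv (Cderiv_n k zeta s) (zeta s))))
      with (Cmul (Cmul Lmu sig) (Cmul (RtoC ((-1) ^ k)) (Cderiv_n k zeta s))); auto.
    unfold Cdiv. rewrite Hinv. cring.
Qed.


Theorem mainTheorem8 (beta k m : nat) (s : Cx) :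
  (1 <= beta)%nat -> (1 <= k)%nat -> (1 <= m)%nat -> Re s > 1 ->
  Cseries_abs_conv (fun i => dirichlet_term beta k m s (S i)) /\
  Cseries_conv (fun i => dirichlet_term beta k m s (S i))
    (Cmul (RtoC ((-1) ^ k))
       (Cmul (sigma_beta beta (Csub Cx1 (Cdiv s (RtoC (INR beta)))) m)
             (Cdiv (Cderiv_n k zeta s) (zeta s)))).
Proof. exact (main_proof beta k m s). Qed.
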